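(* Fix a nonreal $z\in\mathbb C$ and let $v$ be a nonzero function on $\Gamma$ with $Jv=zv$ at every vertex (such $v$ exists and is unique up to a constant multiple). Then $J$ with domain $\mathcal F(\Gamma)$ is essentially selfadjoint in $\ell^2(\Gamma)$ if and only if $v\notin\ell^2(\Gamma)$.
   Context: Let $\Gamma$ be an infinite connected tree whose vertices are arranged in levels $\ell(x)\in\{0,1,2,\dots\}$: every vertex $x$ is adjacent to exactly one vertex $x'$ with $\ell(x')=\ell(x)+1$; for $\ell(x)\ge 1$ the set $N_x=\{y:\ y'=x\}$ of neighbours of $x$ on level $\ell(x)-1$ is finite and nonempty; $N_x=\emptyset$ if $\ell(x)=0$; there are no other edges. Fix $\lambda_x>0$, $\beta_x\in\mathbb R$ for $x\in\Gamma$. The Jacobi matrix $J$ acts on functions $v:\Gamma\to\mathbb C$ by $(Jv)(x)=\lambda_x v(x')+\beta_x v(x)+\sum_{y\in N_x}\lambda_y v(y)$. $\mathcal F(\Gamma)$ denotes the finitely supported functions on $\Gamma$; $J$ with domain $\mathcal F(\Gamma)$ is a symmetric operator in $\ell^2(\Gamma)$. *)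

(* Defs.v *)
From Stdlib Require Import Reals List.
Import ListNotations.
Open Scope R_scope.

Record Cplx : Type := mkC { re : R; im : R }.
Definition C0 : Cplx := mkC 0 0.
Definition RtoC (r : R) : Cplx := mkC r 0.
Definition Cadd (a b : Cplx) : Cplx := mkC (re a + re b) (im a + im b).
Definition Copp (a : Cplx) : Cplx := mkC (- re a) (- im a).
Definition Csub (a b : Cplx) : Cplx := Cadd a (Copp b).
Definition Cmul (a b : Cplx) : Cplx :=
  mkC (re a * re b - im a * im b) (re a * im b + im a * re b).
Definition Cconj (a : Cplx) : Cplx := mkC (re a) (- im a).
Definition Cnorm2 (a : Cplx) : R := re a * re a + im a * im a.

Definition Csum {V : Type} (L : list V) (a : V -> Cplx) : Cplx :=
  fold_right (fun x acc => Cadd (a x) acc) C0 L.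
Definition Rsum {V : Type} (L : list V) (a : V -> R) : R :=
  fold_right (fun x acc => a x + acc) 0 L.

(* ---------- The leveled tree Gamma ----------
   par x = x' (the unique neighbour one level up), lev = level function,
   ch x = an enumeration (without repetition) of N_x = {y : y' = x}. *)
Definition leveled_tree {V : Type} (par : V -> V) (lev : V -> nat)
  (ch : V -> list V) : Prop :=
  (forall x, lev (par x) = S (lev x)) /\
  (forall x, NoDup (ch x)) /\
  (forall x y, In y (ch x) <-> par y = x) /\
  (forall x, ch x = [] <-> lev x = 0%nat) /\
  (* connectedness: any two vertices have a common ancestor *)
  (forall x y, exists m n, Nat.iter m par x = Nat.iter n par y).

Definition l2_bound {V : Type} (u : V -> Cplx) (M : R) : Prop :=
  forall L : list V, NoDup L -> Rsum L (fun x => Cnorm2 (u x)) <= M.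
Definition l2 {V : Type} (u : V -> Cplx) : Prop := exists M, l2_bound u M.

Definition has_sum {V : Type} (a : V -> Cplx) (s : Cplx) : Prop :=
  forall eps, 0 < eps -> exists L0 : list V, forall L, NoDup L -> incl L0 L ->
    Cnorm2 (Csub (Csum L a) s) < eps.

Definition inner {V : Type} (f g : V -> Cplx) (s : Cplx) : Prop :=
  has_sum (fun x => Cmul (Cconj (f x)) (g x)) s.

Definition l2_conv {V : Type} (fn : nat -> V -> Cplx) (u : V -> Cplx) : Prop :=
  forall eps, 0 < eps -> exists N, forall n, (N <= n)%nat ->
    l2_bound (fun x => Csub (fn n x) (u x)) eps.

(* ---------- (possibly unbounded) operators in l^2 as graphs ---------- *)
Definition op (V : Type) := (V -> Cplx) -> (V -> Cplx) -> Prop.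

Definition closure {V : Type} (T : op V) : op V := fun u w =>
  exists fn gn : nat -> V -> Cplx,
    (forall n, T (fn n) (gn n)) /\ l2_conv fn u /\ l2_conv gn w.

Definition adjoint {V : Type} (T : op V) : op V := fun u w =>
  l2 u /\ l2 w /\
  forall f g, T f g -> forall s1 s2, inner g u s1 -> inner f w s2 -> s1 = s2.

Definition selfadjoint {V : Type} (T : op V) : Prop :=
  forall u w, T u w <-> adjoint T u w.

Definition essentially_selfadjoint {V : Type} (T : op V) : Prop :=
  selfadjoint (closure T).

Definition finsupp {V : Type} (f : V -> Cplx) : Prop :=
  exists L : list V, forall x, ~ In x L -> f x = C0.

Definition Japply {V : Type} (par : V -> V) (ch : V -> list V)
  (lam beta : V -> R) (v : V -> Cplx) : V -> Cplx := fun x =>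
  Cadd (Cadd (Cmul (RtoC (lam x)) (v (par x))) (Cmul (RtoC (beta x)) (v x)))
       (Csum (ch x) (fun y => Cmul (RtoC (lam y)) (v y))).

Definition J_fin {V : Type} (par : V -> V) (ch : V -> list V)
  (lam beta : V -> R) : op V := fun f g =>
  finsupp f /\ (forall x, g x = Japply par ch lam beta f x).

(* Main.v *)
Require Import Defs.
From Stdlib Require Import Reals List Lra Psatz Permutation Classical ClassicalEpsilon Arith.
From Stdlib Require Import Ring Field.
Import ListNotations.
Open Scope R_scope.

Module P1.

Definition Cone : Cplx := mkC 1 0.
Definition Cinv (a : Cplx) : Cplx := mkC (re a / Cnorm2 a) (- im a / Cnorm2 a).
Definition Cdiv (a b : Cplx) : Cplx := Cmul a (Cinv b).

Lemma Ceq (a b : Cplx) : re a = re b -> im a = im b -> a = b.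
Proof. destruct a, b; simpl; intros; subst; reflexivity. Qed.

Lemma Cring_th : ring_theory C0 Cone Cadd Cmul Csub Copp (@eq Cplx).
Proof.
  constructor; intros; apply Ceq; unfold Csub, Cadd, Cmul, Copp, C0, Cone; simpl; ring.
Qed.

Lemma Cnorm2_nonneg a : 0 <= Cnorm2 a.
Proof. unfold Cnorm2; nra. Qed.

Lemma Cnorm2_zero a : Cnorm2 a = 0 -> a = C0.
Proof. unfold Cnorm2; intros H; apply Ceq; simpl; nra. Qed.

Lemma Cnorm2_pos a : a <> C0 -> 0 < Cnorm2 a.
Proof. intros H. destruct (Cnorm2_nonneg a) as [h|h]; auto. exfalso; apply H, Cnorm2_zero; auto. Qed.

Lemma Cfield_th : field_theory C0 Cone Cadd Cmul Csub Copp Cdiv Cinv (@eq Cplx).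
Proof.
  constructor.
  - exact Cring_th.
  - intro H. injection H. lra.
  - reflexivity.
  - intros p Hp. apply Ceq; unfold Cinv, Cmul, Cone; simpl;
    pose proof (Cnorm2_pos p Hp) as Hn; unfold Cnorm2 in *; field; lra.
Qed.

Add Field Cfield : Cfield_th.

Lemma C1_neq_C0 : Cone <> C0.
Proof. intro H. injection H. lra. Qed.

Lemma Cnorm2_mul a b : Cnorm2 (Cmul a b) = Cnorm2 a * Cnorm2 b.
Proof. unfold Cnorm2, Cmul; simpl; ring. Qed.
Lemma Cnorm2_conj a : Cnorm2 (Cconj a) = Cnorm2 a.
Proof. unfold Cnorm2, Cconj; simpl; ring. Qed.
Lemma Cnorm2_opp a : Cnorm2 (Copp a) = Cnorm2 a.
Proof. unfold Cnorm2, Copp; simpl; ring. Qed.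
Lemma Cnorm2_add a b : Cnorm2 (Cadd a b) <= 2 * Cnorm2 a + 2 * Cnorm2 b.
Proof. unfold Cnorm2, Cadd; simpl.
  pose proof (pow2_ge_0 (re a - re b)); pose proof (pow2_ge_0 (im a - im b)); nra. Qed.
Lemma Cnorm2_sub a b : Cnorm2 (Csub a b) <= 2 * Cnorm2 a + 2 * Cnorm2 b.
Proof. unfold Csub. rewrite <- (Cnorm2_opp b). apply Cnorm2_add. Qed.
Lemma Cnorm2_RtoC r : Cnorm2 (RtoC r) = r * r.
Proof. unfold Cnorm2, RtoC; simpl; ring. Qed.
Lemma Cnorm2_C0 : Cnorm2 C0 = 0.
Proof. unfold Cnorm2, C0; simpl; ring. Qed.
Lemma im_le_norm a : im a * im a <= Cnorm2 a.
Proof. unfold Cnorm2; nra. Qed.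
Lemma re_le_norm a : re a * re a <= Cnorm2 a.
Proof. unfold Cnorm2; nra. Qed.

Lemma Cconj_add a b : Cconj (Cadd a b) = Cadd (Cconj a) (Cconj b).
Proof. apply Ceq; simpl; ring. Qed.
Lemma Cconj_mul a b : Cconj (Cmul a b) = Cmul (Cconj a) (Cconj b).
Proof. apply Ceq; simpl; ring. Qed.
Lemma Cconj_opp a : Cconj (Copp a) = Copp (Cconj a).
Proof. apply Ceq; simpl; ring. Qed.
Lemma Cconj_RtoC r : Cconj (RtoC r) = RtoC r.
Proof. apply Ceq; simpl; ring. Qed.
Lemma Cconj_C0 : Cconj C0 = C0.
Proof. apply Ceq; simpl; ring. Qed.
Lemma Cconj_C1 : Cconj Cone = Cone.
Proof. apply Ceq; simpl; ring. Qed.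
Lemma Cconj_invol a : Cconj (Cconj a) = a.
Proof. apply Ceq; simpl; ring. Qed.
Lemma RtoC_mul a b : RtoC (a * b) = Cmul (RtoC a) (RtoC b).
Proof. apply Ceq; simpl; ring. Qed.
Lemma RtoC_add a b : RtoC (a + b) = Cadd (RtoC a) (RtoC b).
Proof. apply Ceq; simpl; ring. Qed.
Lemma RtoC_inj a b : RtoC a = RtoC b -> a = b.
Proof. intro H; injection H; auto. Qed.
Lemma RtoC_neq0 a : a <> 0 -> RtoC a <> C0.
Proof. intros H H'; injection H'; auto. Qed.
Lemma Cmul_conj_self a : Cmul (Cconj a) a = RtoC (Cnorm2 a).
Proof. apply Ceq; unfold Cnorm2; simpl; ring. Qed.
Lemma Cmul_self_conj a : Cmul a (Cconj a) = RtoC (Cnorm2 a).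
Proof. apply Ceq; unfold Cnorm2; simpl; ring. Qed.
Lemma Cmul_neq0 a b : a <> C0 -> b <> C0 -> Cmul a b <> C0.
Proof. intros Ha Hb H. apply (Cnorm2_pos a) in Ha. apply (Cnorm2_pos b) in Hb.
  assert (Cnorm2 (Cmul a b) = 0) by (rewrite H; apply Cnorm2_C0).
  rewrite Cnorm2_mul in H0. nra. Qed.

(* z - conj z = 2 i im z *)
Lemma zsub_conj_neq0 z : im z <> 0 -> Csub z (Cconj z) <> C0.
Proof. intros H H'. injection H'. intros. lra. Qed.

End P1.
Import P1.

Module P2.

Section Sums.
Context {V : Type}.

Lemma Csum_app (L1 L2 : list V) a : Csum (L1 ++ L2) a = Cadd (Csum L1 a) (Csum L2 a).
Proof. induction L1; simpl. - apply Ceq; simpl; ring. - rewrite IHL1. ring. Qed.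

Lemma Csum_perm (L1 L2 : list V) a : Permutation L1 L2 -> Csum L1 a = Csum L2 a.
Proof. induction 1; simpl; try congruence. ring. Qed.

Lemma Csum_ext_in (L : list V) a b : (forall x, In x L -> a x = b x) -> Csum L a = Csum L b.
Proof. induction L; simpl; intros H; auto. rewrite H, IHL; auto. Qed.

Lemma Csum_add (L : list V) a b :
  Csum L (fun x => Cadd (a x) (b x)) = Cadd (Csum L a) (Csum L b).
Proof. induction L; simpl. - apply Ceq; simpl; ring. - rewrite IHL; ring. Qed.

Lemma Csum_scale (L : list V) c a :
  Csum L (fun x => Cmul c (a x)) = Cmul c (Csum L a).
Proof. induction L; simpl. - apply Ceq; simpl; ring. - rewrite IHL; ring. Qed.

Lemma Csum_scale_r (L : list V) c a :
  Csum L (fun x => Cmul (a x) c) = Cmul (Csum L a) c.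
Proof. induction L; simpl. - apply Ceq; simpl; ring. - rewrite IHL; ring. Qed.

Lemma Csum_opp (L : list V) a :
  Csum L (fun x => Copp (a x)) = Copp (Csum L a).
Proof. induction L; simpl. - apply Ceq; simpl; ring. - rewrite IHL; ring. Qed.

Lemma Csum_sub (L : list V) a b :
  Csum L (fun x => Csub (a x) (b x)) = Csub (Csum L a) (Csum L b).
Proof. induction L; simpl. - apply Ceq; simpl; ring. - rewrite IHL; ring. Qed.

Lemma Csum_conj (L : list V) a :
  Csum L (fun x => Cconj (a x)) = Cconj (Csum L a).
Proof. induction L; simpl. - apply Ceq; simpl; ring. - rewrite IHL, Cconj_add; auto. Qed.

Lemma Csum_zero (L : list V) a : (forall x, In x L -> a x = C0) -> Csum L a = C0.
Proof. induction L; simpl; intros H; auto. rewrite H, IHL; auto. ring. Qed.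

Lemma Csum_single (L : list V) a y :
  NoDup L -> In y L -> (forall x, In x L -> x <> y -> a x = C0) -> Csum L a = a y.
Proof.
  induction L as [|b L IH]; simpl; intros Hnd Hin H; [contradiction|].
  inversion Hnd; subst. destruct Hin as [<-|Hin].
  - rewrite Csum_zero. ring. intros x Hx. apply H; auto. intro; subst; contradiction.
  - rewrite IH; auto. rewrite H; auto. ring. intro; subst; contradiction.
Qed.

Lemma exists_nodup_filter (P : V -> Prop) (A : list V) :
  exists L, NoDup L /\ forall x, In x L <-> In x A /\ P x.
Proof.
  induction A as [|a A IH].
  - exists []; split; [constructor|]; simpl; tauto.
  - destruct IH as [L [HL HiL]].
    destruct (classic (P a /\ ~ In a L)) as [[Hp Hn]|Hn].
    + exists (a :: L); split; [constructor; auto|].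
      intros x; simpl; rewrite HiL; split.
      * intros [<-|[]]; auto.
      * intros [[<-|Hx] Hp']; auto.
    + exists L; split; auto. intros x; rewrite HiL; simpl; split.
      * intros [Hx Hp]; auto.
      * intros [[<-|Hx] Hp]; auto. split; auto.
        apply NNPP; intro Hc. apply Hn; split; auto. intro Hc'. apply Hc. apply HiL in Hc'. tauto.
Qed.

Lemma exists_nodup_cover (A : list V) : exists L, NoDup L /\ forall x, In x L <-> In x A.
Proof. destruct (exists_nodup_filter (fun _ => True) A) as [L [H1 H2]].
  exists L; split; auto. intros x; rewrite H2; tauto. Qed.

Lemma exists_nodup_incl (A B : list V) : exists L, NoDup L /\ incl A L /\ incl B L.
Proof. destruct (exists_nodup_cover (A ++ B)) as [L [H1 H2]].
  exists L; split; auto; split; intros x Hx; apply H2; apply in_or_app; auto. Qed.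

Lemma NoDup_app_disj (K R : list V) x : NoDup (K ++ R) -> In x R -> ~ In x K.
Proof.
  induction K; simpl; intros H Hx; auto.
  inversion H; subst. intros [<-|Hk].
  - apply H2; apply in_or_app; auto.
  - apply IHK; auto.
Qed.

Lemma incl_split (K L : list V) : NoDup K -> NoDup L -> incl K L ->
  exists R, Permutation L (K ++ R).
Proof.
  revert L; induction K as [|k K IH]; intros L HK HL Hi.
  - exists L; simpl; auto.
  - inversion HK; subst.
    assert (Hk : In k L) by (apply Hi; left; auto).
    destruct (in_split _ _ Hk) as [L1 [L2 ->]].
    destruct (IH (L1 ++ L2)) as [R HR]; auto.
    + eapply NoDup_remove_1; eauto.
    + intros x Hx. assert (In x (L1 ++ k :: L2)) by (apply Hi; right; auto).
      apply in_app_or in H. apply in_or_app. destruct H as [H|[H|H]]; auto.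
      subst; contradiction.
    + exists R. simpl. eapply Permutation_trans.
      * apply Permutation_sym, Permutation_middle.
      * apply perm_skip; auto.
Qed.

Lemma Csum_support (K L : list V) a : NoDup K -> NoDup L -> incl K L ->
  (forall x, In x L -> ~ In x K -> a x = C0) -> Csum L a = Csum K a.
Proof.
  intros HK HL Hi H. destruct (incl_split K L HK HL Hi) as [R HR].
  rewrite (Csum_perm _ _ _ HR), Csum_app.
  rewrite (Csum_zero R). ring.
  intros x Hx. apply H.
  - apply (Permutation_in x (Permutation_sym HR)). apply in_or_app; auto.
  - apply (NoDup_app_disj K R); auto. eapply Permutation_NoDup; eauto.
Qed.

Lemma Rsum_app (L1 L2 : list V) a : Rsum (L1 ++ L2) a = Rsum L1 a + Rsum L2 a.
Proof. induction L1; simpl. - ring. - rewrite IHL1. ring. Qed.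

Lemma Rsum_perm (L1 L2 : list V) a : Permutation L1 L2 -> Rsum L1 a = Rsum L2 a.
Proof. induction 1; simpl; try lra. Qed.

Lemma Rsum_ext_in (L : list V) a b : (forall x, In x L -> a x = b x) -> Rsum L a = Rsum L b.
Proof. induction L; simpl; intros H; auto. rewrite H, IHL; auto. Qed.

Lemma Rsum_le (L : list V) a b : (forall x, In x L -> a x <= b x) -> Rsum L a <= Rsum L b.
Proof. induction L; simpl; intros H. lra. pose proof (H a0 (or_introl eq_refl)).
  pose proof (IHL (fun x Hx => H x (or_intror Hx))). lra. Qed.

Lemma Rsum_nonneg (L : list V) a : (forall x, In x L -> 0 <= a x) -> 0 <= Rsum L a.
Proof. induction L; simpl; intros H. lra. pose proof (H a0 (or_introl eq_refl)).
  pose proof (IHL (fun x Hx => H x (or_intror Hx))). lra. Qed.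

Lemma Rsum_add (L : list V) a b : Rsum L (fun x => a x + b x) = Rsum L a + Rsum L b.
Proof. induction L; simpl. ring. rewrite IHL; ring. Qed.

Lemma Rsum_scale (L : list V) c a : Rsum L (fun x => c * a x) = c * Rsum L a.
Proof. induction L; simpl. ring. rewrite IHL; ring. Qed.

Lemma Rsum_zero (L : list V) a : (forall x, In x L -> a x = 0) -> Rsum L a = 0.
Proof. induction L; simpl; intros H; auto. rewrite H, IHL; auto. ring. Qed.

Lemma Rsum_support (K L : list V) a : NoDup K -> NoDup L -> incl K L ->
  (forall x, In x L -> ~ In x K -> a x = 0) -> Rsum L a = Rsum K a.
Proof.
  intros HK HL Hi H. destruct (incl_split K L HK HL Hi) as [R HR].
  rewrite (Rsum_perm _ _ _ HR), Rsum_app.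
  rewrite (Rsum_zero R). ring.
  intros x Hx. apply H.
  - apply (Permutation_in x (Permutation_sym HR)). apply in_or_app; auto.
  - apply (NoDup_app_disj K R); auto. eapply Permutation_NoDup; eauto.
Qed.

Lemma Rsum_le_incl (K L : list V) a : NoDup K -> NoDup L -> incl K L ->
  (forall x, 0 <= a x) -> Rsum K a <= Rsum L a.
Proof.
  intros HK HL Hi H. destruct (incl_split K L HK HL Hi) as [R HR].
  rewrite (Rsum_perm _ _ _ HR), Rsum_app.
  pose proof (Rsum_nonneg R a (fun x _ => H x)). lra.
Qed.

Lemma Rsum_restrict_le (K L : list V) a : NoDup K -> NoDup L ->
  (forall x, 0 <= a x) -> (forall x, ~ In x K -> a x = 0) -> Rsum L a <= Rsum K a.
Proof.
  intros HK HL Hp Hz.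
  destruct (exists_nodup_filter (fun x => In x K) L) as [M [HM HiM]].
  assert (E : Rsum L a = Rsum M a).
  { apply Rsum_support; auto. intros x Hx; apply HiM; auto.
    intros x Hx Hn. apply Hz. intro Hk. apply Hn, HiM; auto. }
  rewrite E. apply Rsum_le_incl; auto. intros x Hx; apply HiM; auto.
Qed.

End Sums.

Lemma Csum_exchange {V W : Type} (L : list V) (K : list W) F :
  Csum L (fun x => Csum K (fun y => F x y)) = Csum K (fun y => Csum L (fun x => F x y)).
Proof.
  induction L; simpl.
  - symmetry. induction K; simpl; auto. rewrite IHK. apply Ceq; simpl; ring.
  - rewrite IHL. symmetry. apply (Csum_add K (fun y => F a y) (fun y => Csum L (fun x => F x y))).
Qed.


End P2.
Import P2.

Module P3.

Lemma sq_le_imp (X Y : R) : 0 <= Y -> X * X <= Y * Y -> X <= Y.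
Proof. intros. nra. Qed.

Lemma CS {V : Type} (L : list V) a b :
  Cnorm2 (Csum L (fun x => Cmul (a x) (b x))) <=
  Rsum L (fun x => Cnorm2 (a x)) * Rsum L (fun x => Cnorm2 (b x)).
Proof.
  induction L as [|y L IH]; simpl.
  - unfold Cnorm2, C0; simpl; lra.
  - set (A := Csum L (fun x => Cmul (a x) (b x))) in *.
    set (P := Rsum L (fun x => Cnorm2 (a x))) in *.
    set (Q := Rsum L (fun x => Cnorm2 (b x))) in *.
    assert (HP : 0 <= P) by (apply Rsum_nonneg; intros; apply Cnorm2_nonneg).
    assert (HQ : 0 <= Q) by (apply Rsum_nonneg; intros; apply Cnorm2_nonneg).
    set (m := Cmul (a y) (b y)).
    assert (Hm : Cnorm2 m = Cnorm2 (a y) * Cnorm2 (b y)) by apply Cnorm2_mul.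
    set (na := Cnorm2 (a y)) in *. set (nb := Cnorm2 (b y)) in *.
    assert (Hna : 0 <= na) by apply Cnorm2_nonneg.
    assert (Hnb : 0 <= nb) by apply Cnorm2_nonneg.
    set (X := re A * re m + im A * im m).
    assert (H1 : X * X <= Cnorm2 A * Cnorm2 m).
    { unfold X, Cnorm2. pose proof (pow2_ge_0 (re A * im m - im A * re m)). nra. }
    assert (H2 : Cnorm2 A * Cnorm2 m <= P * Q * (na * nb)).
    { rewrite Hm. apply Rmult_le_compat_r; [nra|]. auto. }
    assert (H3 : 2 * X <= P * nb + Q * na).
    { apply sq_le_imp. nra. pose proof (pow2_ge_0 (P * nb - Q * na)). nra. }
    assert (E : Cnorm2 (Cadd m A) = Cnorm2 m + 2 * X + Cnorm2 A).
    { unfold Cnorm2, X, Cadd; simpl. ring. }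
    rewrite E, Hm. nra.
Qed.

Section L2.
Context {V : Type}.
Implicit Types (f g u : V -> Cplx) (fn : nat -> V -> Cplx) (L K : list V).

Definition fadd (f g : V -> Cplx) : V -> Cplx := fun x => Cadd (f x) (g x).
Definition fsub (f g : V -> Cplx) : V -> Cplx := fun x => Csub (f x) (g x).
Definition fscale (c : Cplx) (f : V -> Cplx) : V -> Cplx := fun x => Cmul c (f x).
Definition fzero : V -> Cplx := fun _ => C0.

Definition nsum (L : list V) (f : V -> Cplx) := Rsum L (fun x => Cnorm2 (f x)).

Lemma nsum_nonneg L f : 0 <= nsum L f.
Proof. apply Rsum_nonneg; intros; apply Cnorm2_nonneg. Qed.

Lemma l2_bound_ext f g M : (forall x, f x = g x) -> l2_bound f M -> l2_bound g M.
Proof. intros E H L HL. specialize (H L HL). erewrite Rsum_ext_in; eauto.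
  intros x _; simpl; rewrite E; auto. Qed.

Lemma l2_bound_mono f M M' : M <= M' -> l2_bound f M -> l2_bound f M'.
Proof. intros H1 H2 L HL. specialize (H2 L HL). lra. Qed.

Lemma l2_bound_nonneg f M : l2_bound f M -> 0 <= M.
Proof. intros H. specialize (H [] (NoDup_nil _)). simpl in H. auto. Qed.

Lemma l2_bound_add f g a b : l2_bound f a -> l2_bound g b ->
  l2_bound (fun x => Cadd (f x) (g x)) (2 * a + 2 * b).
Proof.
  intros Hf Hg L HL. specialize (Hf L HL). specialize (Hg L HL).
  eapply Rle_trans. apply Rsum_le. intros x _. apply Cnorm2_add.
  rewrite Rsum_add, !Rsum_scale. lra.
Qed.

Lemma l2_bound_sub f g a b : l2_bound f a -> l2_bound g b ->
  l2_bound (fun x => Csub (f x) (g x)) (2 * a + 2 * b).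
Proof.
  intros Hf Hg L HL. specialize (Hf L HL). specialize (Hg L HL).
  eapply Rle_trans. apply Rsum_le. intros x _. apply Cnorm2_sub.
  rewrite Rsum_add, !Rsum_scale. lra.
Qed.

Lemma l2_bound_scale c f a : l2_bound f a -> l2_bound (fun x => Cmul c (f x)) (Cnorm2 c * a).
Proof.
  intros Hf L HL. specialize (Hf L HL).
  erewrite Rsum_ext_in. 2:{ intros x _. rewrite Cnorm2_mul. reflexivity. }
  rewrite Rsum_scale. apply Rmult_le_compat_l; auto. apply Cnorm2_nonneg.
Qed.

Lemma l2_bound_zero : l2_bound fzero 0.
Proof. intros L HL. rewrite Rsum_zero; [lra|]. intros; apply Cnorm2_C0. Qed.

Lemma l2_bound_zero' f : (forall x, f x = C0) -> forall e, 0 <= e -> l2_bound f e.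
Proof. intros H e He L HL. rewrite Rsum_zero; [lra|]. intros; rewrite H; apply Cnorm2_C0. Qed.

Lemma l2_bound_point f M x : l2_bound f M -> Cnorm2 (f x) <= M.
Proof. intros H. assert (Hn : NoDup [x]) by (constructor; [simpl; tauto|constructor]).
  specialize (H [x] Hn). simpl in H. lra. Qed.

Lemma finsupp_l2_bound f K : NoDup K -> (forall x, ~ In x K -> f x = C0) ->
  l2_bound f (nsum K f).
Proof.
  intros HK Hf L HL. apply Rsum_restrict_le; auto. intros; apply Cnorm2_nonneg.
  intros x Hx; rewrite Hf; auto; apply Cnorm2_C0.
Qed.

Lemma finsupp_nodup f : finsupp f -> exists K, NoDup K /\ forall x, ~ In x K -> f x = C0.
Proof. intros [L HL]. destruct (exists_nodup_cover L) as [K [HK HiK]].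
  exists K; split; auto. intros x Hx; apply HL; intro; apply Hx, HiK; auto. Qed.

Lemma finsupp_l2 f : finsupp f -> l2 f.
Proof. intros Hf. destruct (finsupp_nodup f Hf) as [K [HK Hz]].
  exists (nsum K f). apply finsupp_l2_bound; auto. Qed.

Lemma finsupp_add f g : finsupp f -> finsupp g -> finsupp (fun x => Cadd (f x) (g x)).
Proof. intros [K1 H1] [K2 H2]. exists (K1 ++ K2). intros x Hx.
  rewrite H1, H2. apply Ceq; simpl; ring.
  all: intro; apply Hx; apply in_or_app; auto. Qed.

Lemma finsupp_sub f g : finsupp f -> finsupp g -> finsupp (fun x => Csub (f x) (g x)).
Proof. intros [K1 H1] [K2 H2]. exists (K1 ++ K2). intros x Hx.
  rewrite H1, H2. apply Ceq; simpl; ring.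
  all: intro; apply Hx; apply in_or_app; auto. Qed.

Lemma finsupp_scale c f : finsupp f -> finsupp (fun x => Cmul c (f x)).
Proof. intros [K H]. exists K. intros x Hx. rewrite H; auto. apply Ceq; simpl; ring. Qed.

Lemma finsupp_conj f : finsupp f -> finsupp (fun x => Cconj (f x)).
Proof. intros [K H]. exists K. intros x Hx. rewrite H; auto. apply Ceq; simpl; ring. Qed.

Lemma finsupp_zero : finsupp fzero.
Proof. exists []. auto. Qed.

Lemma l2_add f g : l2 f -> l2 g -> l2 (fun x => Cadd (f x) (g x)).
Proof. intros [a Ha] [b Hb]. eexists. apply l2_bound_add; eauto. Qed.
Lemma l2_sub f g : l2 f -> l2 g -> l2 (fun x => Csub (f x) (g x)).
Proof. intros [a Ha] [b Hb]. eexists. apply l2_bound_sub; eauto. Qed.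
Lemma l2_scale c f : l2 f -> l2 (fun x => Cmul c (f x)).
Proof. intros [a Ha]. eexists. apply l2_bound_scale; eauto. Qed.

Lemma l2_conv_l2 fn u : (forall n, l2 (fn n)) -> l2_conv fn u -> l2 u.
Proof.
  intros Hl Hc. destruct (Hc 1 Rlt_0_1) as [N HN]. specialize (HN N (le_n N)).
  destruct (Hl N) as [M HM].
  exists (2 * M + 2 * 1). eapply l2_bound_ext; [|apply (l2_bound_sub (fn N) (fun x => Csub (fn N x) (u x)) M 1); auto].
  intros x; simpl. apply Ceq; simpl; ring.
Qed.

Lemma inner_bound L f g a b : NoDup L -> l2_bound f a -> l2_bound g b ->
  Cnorm2 (Csum L (fun x => Cmul (Cconj (f x)) (g x))) <= a * b.
Proof.
  intros HL Hf Hg. eapply Rle_trans. apply (CS L (fun x => Cconj (f x)) g). cbv beta.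
  rewrite (Rsum_ext_in L (fun x => Cnorm2 (Cconj (f x))) (fun x => Cnorm2 (f x))). 2:{ intros; apply Cnorm2_conj. }
  apply Rmult_le_compat; auto; try apply Rsum_nonneg; intros; apply Cnorm2_nonneg.
Qed.

Lemma inner_bound' L f g a b : NoDup L -> l2_bound f a -> l2_bound g b ->
  Cnorm2 (Csum L (fun x => Cmul (f x) (g x))) <= a * b.
Proof.
  intros HL Hf Hg. eapply Rle_trans. apply CS.
  apply Rmult_le_compat; auto; try apply Rsum_nonneg; intros; apply Cnorm2_nonneg.
Qed.

End L2.

Lemma Cnorm2_add4 a b c d :
  Cnorm2 (Cadd (Cadd a b) (Cadd c d)) <= 4 * (Cnorm2 a + Cnorm2 b + Cnorm2 c + Cnorm2 d).
Proof.
  pose proof (Cnorm2_add (Cadd a b) (Cadd c d)).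
  pose proof (Cnorm2_add a b). pose proof (Cnorm2_add c d). lra.
Qed.

Lemma Cnorm2_small_zero a : (forall e, 0 < e -> Cnorm2 a <= e) -> a = C0.
Proof.
  intros H. apply Cnorm2_zero. pose proof (Cnorm2_nonneg a).
  destruct H0 as [H0|H0]; auto.
  specialize (H (Cnorm2 a / 2)). lra.
Qed.

End P3.
Import P3.

Module P4.

Lemma Csub_zero_eq a b : Csub a b = C0 -> a = b.
Proof. intros H. assert (a = Cadd (Csub a b) b) by ring. rewrite H0, H. ring. Qed.

Section HS.
Context {V : Type}.
Implicit Types (f g u w a : V -> Cplx) (fn gn : nat -> V -> Cplx) (L K : list V).

Lemma has_sum_fin a K : NoDup K -> (forall x, ~ In x K -> a x = C0) -> has_sum a (Csum K a).
Proof.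
  intros HK Ha eps Heps. exists K. intros L HL Hi.
  rewrite (Csum_support K L a); auto.
  replace (Csub (Csum K a) (Csum K a)) with C0 by ring. rewrite Cnorm2_C0; auto.
Qed.

Lemma has_sum_fin_eq a K s : NoDup K -> (forall x, ~ In x K -> a x = C0) -> has_sum a s ->
  s = Csum K a.
Proof.
  intros HK Ha Hs. symmetry. apply Csub_zero_eq. apply Cnorm2_small_zero. intros e He.
  destruct (Hs e He) as [L0 HL0].
  destruct (exists_nodup_incl L0 K) as [L [HL [H1 H2]]].
  specialize (HL0 L HL H1). rewrite (Csum_support K L a) in HL0; auto. lra.
Qed.

Lemma approx_inner L g (gn : V -> Cplx) u (un : V -> Cplx) Mg Mu d : NoDup L -> l2_bound g Mg -> l2_bound u Mu ->
  l2_bound (fun x => Csub (gn x) (g x)) d -> l2_bound (fun x => Csub (un x) (u x)) d -> d <= 1 ->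
  Cnorm2 (Csub (Csum L (fun x => Cmul (Cconj (gn x)) (un x)))
               (Csum L (fun x => Cmul (Cconj (g x)) (u x)))) <= (2 * Mu + 2 * (2 * Mg + 2)) * d.
Proof.
  intros HL Hg Hu Hgd Hud Hd.
  rewrite <- Csum_sub.
  rewrite (Csum_ext_in L _ (fun x => Cadd (Cmul (Cconj (Csub (gn x) (g x))) (u x))
                                        (Cmul (Cconj (gn x)) (Csub (un x) (u x))))).
  2:{ intros x _. apply Ceq; simpl; ring. }
  rewrite Csum_add.
  eapply Rle_trans. apply Cnorm2_add.
  assert (Hgn : l2_bound gn (2 * Mg + 2 * d)).
  { eapply l2_bound_ext; [|apply (l2_bound_add g (fun x => Csub (gn x) (g x)) Mg d); auto].
    intros x; simpl; apply Ceq; simpl; ring. }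
  pose proof (inner_bound L _ _ _ _ HL Hgd Hu).
  pose proof (inner_bound L _ _ _ _ HL Hgn Hud).
  pose proof (l2_bound_nonneg _ _ Hg). pose proof (l2_bound_nonneg _ _ Hu).
  pose proof (l2_bound_nonneg _ _ Hgd).
  assert ((2 * Mg + 2 * d) * d <= (2 * Mg + 2) * d) by nra.
  nra.
Qed.

Lemma pair_eq f g u w fn gn (un wn : nat -> V -> Cplx) :
  l2 f -> l2 g -> l2 u -> l2 w ->
  l2_conv fn f -> l2_conv gn g -> l2_conv un u -> l2_conv wn w ->
  (forall n m, exists L0, forall L, NoDup L -> incl L0 L ->
     Csum L (fun x => Cmul (Cconj (gn n x)) (un m x)) = Csum L (fun x => Cmul (Cconj (fn n x)) (wn m x))) ->
  forall s1 s2, inner g u s1 -> inner f w s2 -> s1 = s2.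
Proof.
  intros [Mf Hf] [Mg Hg] [Mu Hu] [Mw Hw] Cf Cg Cu Cw Heq s1 s2 H1 H2.
  apply Csub_zero_eq. apply Cnorm2_small_zero.
  set (Cone' := 2 * Mu + 2 * (2 * Mg + 2)). set (C2' := 2 * Mw + 2 * (2 * Mf + 2)).
  pose proof (l2_bound_nonneg _ _ Hf). pose proof (l2_bound_nonneg _ _ Hg).
  pose proof (l2_bound_nonneg _ _ Hu). pose proof (l2_bound_nonneg _ _ Hw).
  assert (HK : 0 < 4 * (2 + Cone' + C2')) by (unfold Cone', C2'; lra).
  intros e He.
  set (KK := 4 * (2 + Cone' + C2')) in *.
  set (d := Rmin 1 (e * / KK)).
  assert (Hd0 : 0 < d) by (unfold d; apply Rmin_glb_lt; [lra|apply Rmult_lt_0_compat; [lra|apply Rinv_0_lt_compat; lra]]).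
  assert (Hd1 : d <= 1) by apply Rmin_l.
  assert (Hde : d * KK <= e).
  { unfold d. pose proof (Rmin_r 1 (e * / KK)) as Hm.
    apply (Rmult_le_compat_r KK) in Hm; [|lra].
    rewrite Rmult_assoc, Rinv_l, Rmult_1_r in Hm; [lra|]. apply Rgt_not_eq; lra. }
  destruct (Cf d Hd0) as [N1 HN1]. destruct (Cg d Hd0) as [N2 HN2].
  destruct (Cu d Hd0) as [N3 HN3]. destruct (Cw d Hd0) as [N4 HN4].
  set (n := (N1 + N2)%nat). set (m := (N3 + N4)%nat).
  specialize (HN1 n ltac:(unfold n; lia)). specialize (HN2 n ltac:(unfold n; lia)).
  specialize (HN3 m ltac:(unfold m; lia)). specialize (HN4 m ltac:(unfold m; lia)).
  destruct (Heq n m) as [L0 HL0].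
  destruct (H1 d Hd0) as [L1 HL1]. destruct (H2 d Hd0) as [L2 HL2].
  destruct (exists_nodup_cover (L0 ++ L1 ++ L2)) as [L [HL HiL]].
  assert (i0 : incl L0 L) by (intros x Hx; apply HiL; apply in_or_app; auto).
  assert (i1 : incl L1 L) by (intros x Hx; apply HiL; apply in_or_app; right; apply in_or_app; auto).
  assert (i2 : incl L2 L) by (intros x Hx; apply HiL; apply in_or_app; right; apply in_or_app; auto).
  specialize (HL0 L HL i0). specialize (HL1 L HL i1). specialize (HL2 L HL i2).
  pose proof (approx_inner L g (gn n) u (un m) Mg Mu d HL Hg Hu HN2 HN3 Hd1) as A1.
  pose proof (approx_inner L f (fn n) w (wn m) Mf Mw d HL Hf Hw HN1 HN4 Hd1) as A2.
  fold Cone' in A1. fold C2' in A2.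
  rewrite HL0 in A1.
  set (P := Csum L (fun x => Cmul (Cconj (g x)) (u x))) in *.
  set (Q := Csum L (fun x => Cmul (Cconj (f x)) (w x))) in *.
  set (R0 := Csum L (fun x => Cmul (Cconj (fn n x)) (wn m x))) in *.
  replace (Csub s1 s2) with (Cadd (Cadd (Copp (Csub P s1)) (Copp (Csub R0 P))) (Cadd (Csub R0 Q) (Csub Q s2))) by ring.
  eapply Rle_trans. apply Cnorm2_add4. rewrite !Cnorm2_opp.
  unfold inner in *. fold P in HL1. fold Q in HL2.
  assert (Cnorm2 (Csub Q s2) < d) by auto.
  assert (Cnorm2 (Csub P s1) < d) by auto.
  assert (E : d * KK = 4 * (2 * d + Cone' * d + C2' * d)) by (unfold KK; ring).
  clearbody P Q R0 KK d Cone' C2'. lra.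
Qed.

Definition chiL (K : list V) (h : V -> Cplx) : V -> Cplx :=
  fun x => if excluded_middle_informative (In x K) then h x else C0.

Lemma l2_tail h : l2 h -> forall eps, 0 < eps -> exists K, NoDup K /\
  l2_bound (fun x => Csub (h x) (chiL K h x)) eps.
Proof.
  intros [M HM] eps Heps.
  set (E := fun r => exists L, NoDup L /\ r = nsum L h).
  assert (Hb : bound E) by (exists M; intros r [L [HL ->]]; apply HM; auto).
  assert (Hne : exists r, E r) by (exists 0; exists []; split; [constructor|reflexivity]).
  destruct (completeness E Hb Hne) as [s [Hs1 Hs2]].
  assert (exists K, NoDup K /\ s - eps < nsum K h) as [K [HK HKs]].
  { apply NNPP; intro Hn. assert (s <= s - eps); [|lra].
    apply Hs2. intros r [L [HL ->]]. apply Rnot_lt_le. intro Hc. apply Hn. exists L; auto. }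
  exists K; split; auto.
  intros L HL.
  destruct (exists_nodup_incl L K) as [M' [HM' [Hi1 Hi2]]].
  assert (S1 : nsum M' h <= s) by (apply Hs1; exists M'; auto).
  assert (E1 : nsum M' h = nsum K h + Rsum M' (fun x => Cnorm2 (Csub (h x) (chiL K h x)))).
  { unfold nsum.
    transitivity (Rsum M' (fun x => Cnorm2 (chiL K h x) + Cnorm2 (Csub (h x) (chiL K h x)))).
    - apply Rsum_ext_in. intros x _. unfold chiL.
      destruct (excluded_middle_informative (In x K)).
      + replace (Csub (h x) (h x)) with C0 by ring. rewrite Cnorm2_C0; ring.
      + replace (Csub (h x) C0) with (h x) by ring. rewrite Cnorm2_C0; ring.
    - rewrite Rsum_add. f_equal.
      rewrite (Rsum_support K M' (fun x => Cnorm2 (chiL K h x))); auto.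
      + apply Rsum_ext_in. intros x Hx. unfold chiL. destruct (excluded_middle_informative (In x K)); tauto.
      + intros x _ Hx. unfold chiL. destruct (excluded_middle_informative (In x K)); try tauto.
        apply Cnorm2_C0. }
  assert (S2 : Rsum L (fun x => Cnorm2 (Csub (h x) (chiL K h x))) <=
               Rsum M' (fun x => Cnorm2 (Csub (h x) (chiL K h x)))).
  { apply Rsum_le_incl; auto. intros; apply Cnorm2_nonneg. }
  lra.
Qed.

Lemma chiL_finsupp K h : finsupp (chiL K h).
Proof. exists K. intros x Hx. unfold chiL. destruct (excluded_middle_informative (In x K)); tauto. Qed.

End HS.

End P4.
Import P4.

Module P5.

Lemma abs_lt_of_sq d e : 0 < e -> d * d < e * e -> Rabs d < e.
Proof. intros. unfold Rabs; destruct (Rcase_abs d); nra. Qed.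

Lemma cv_const c : Un_cv (fun _ => c) c.
Proof. intros e He. exists 0%nat. intros. unfold Rdist. replace (c - c) with 0 by ring.
  rewrite Rabs_R0; lra. Qed.

Lemma cv_le (U : nat -> R) l e N : Un_cv U l -> (forall n, (N <= n)%nat -> U n <= e) -> l <= e.
Proof.
  intros Hc Hb. apply Rnot_lt_le. intro Hlt.
  destruct (Hc (l - e)) as [M HM]; [lra|].
  specialize (HM (N + M)%nat ltac:(lia)). specialize (Hb (N + M)%nat ltac:(lia)).
  unfold Rdist in HM. apply Rabs_def2 in HM. lra.
Qed.

Lemma cv_Rsum {V : Type} (L : list V) (F : nat -> V -> R) (G : V -> R) :
  (forall x, In x L -> Un_cv (fun n => F n x) (G x)) ->
  Un_cv (fun n => Rsum L (F n)) (Rsum L G).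
Proof.
  induction L as [|y L IH]; simpl; intros H.
  - apply cv_const.
  - apply CV_plus; auto.
Qed.

Lemma l2_complete {V : Type} (phi : nat -> V -> Cplx) :
  (forall eps, 0 < eps -> exists N, forall k l, (N <= k)%nat -> (N <= l)%nat ->
     l2_bound (fun x => Csub (phi k x) (phi l x)) eps) ->
  exists f, l2_conv phi f.
Proof.
  intros Hc.
  assert (Hre : forall x, Cauchy_crit (fun k => re (phi k x))).
  { intros x e He. destruct (Hc (e * e / 2)) as [N HN]. { apply Rdiv_lt_0_compat; nra. }
    exists N. intros n m Hn Hm. unfold Rdist. apply abs_lt_of_sq; auto.
    pose proof (l2_bound_point _ _ x (HN n m Hn Hm)).
    pose proof (re_le_norm (Csub (phi n x) (phi m x))). simpl in H0. nra. }
  assert (Him : forall x, Cauchy_crit (fun k => im (phi k x))).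
  { intros x e He. destruct (Hc (e * e / 2)) as [N HN]. { apply Rdiv_lt_0_compat; nra. }
    exists N. intros n m Hn Hm. unfold Rdist. apply abs_lt_of_sq; auto.
    pose proof (l2_bound_point _ _ x (HN n m Hn Hm)).
    pose proof (im_le_norm (Csub (phi n x) (phi m x))). simpl in H0. nra. }
  set (f := fun x => mkC (proj1_sig (R_complete _ (Hre x))) (proj1_sig (R_complete _ (Him x)))).
  assert (Cre : forall x, Un_cv (fun k => re (phi k x)) (re (f x))).
  { intros x. unfold f; simpl. apply (proj2_sig (R_complete _ (Hre x))). }
  assert (Cim : forall x, Un_cv (fun k => im (phi k x)) (im (f x))).
  { intros x. unfold f; simpl. apply (proj2_sig (R_complete _ (Him x))). }
  exists f. intros e He. destruct (Hc e He) as [N HN]. exists N. intros k Hk L HL.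
  apply (cv_le (fun l => Rsum L (fun x => Cnorm2 (Csub (phi k x) (phi l x)))) _ e N).
  - apply cv_Rsum. intros x _. unfold Cnorm2, Csub, Cadd, Copp; simpl.
    apply CV_plus; apply CV_mult; apply CV_plus; try apply cv_const;
      try (apply (CV_mult (fun _ => -1) _ (-1)); [apply cv_const|]);
      try (apply CV_opp); auto.
  - intros l Hl. apply (HN k l Hk Hl L HL).
Qed.

End P5.
Import P5.

Module P6.

Notation dec := excluded_middle_informative.

Section Tree.
Context {V : Type} (par : V -> V) (lev : V -> nat) (ch : V -> list V)
  (Htree : leveled_tree par lev ch) (lam beta : V -> R).
Implicit Types (f g u w a : V -> Cplx) (L K : list V) (x y : V).

Let J := Japply par ch lam beta.

Lemma Hlev x : lev (par x) = S (lev x).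
Proof. apply Htree. Qed.
Lemma Hnd x : NoDup (ch x).
Proof. apply Htree. Qed.
Lemma Hch x y : In y (ch x) <-> par y = x.
Proof. apply Htree. Qed.
Lemma Hconn x y : exists m n, Nat.iter m par x = Nat.iter n par y.
Proof. apply Htree. Qed.

Lemma lev_iter m x : lev (Nat.iter m par x) = (m + lev x)%nat.
Proof. induction m; simpl; auto. rewrite Hlev, IHm; auto. Qed.

Lemma par_neq x : par x <> x.
Proof. intro H. pose proof (Hlev x). rewrite H in H0. lia. Qed.

Definition desc y x := exists m, Nat.iter m par x = y.

Lemma desc_refl y : desc y y.
Proof. exists 0%nat; auto. Qed.

Lemma desc_lev y x : desc y x -> (lev x <= lev y)%nat.
Proof. intros [m <-]. rewrite lev_iter. lia. Qed.

Lemma desc_lev_eq y x : desc y x -> lev x = lev y -> x = y.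
Proof. intros [m Hm] He. destruct m; simpl in *; auto.
  subst y. rewrite Hlev, lev_iter in He. lia. Qed.

Lemma par_not_desc y : ~ desc y (par y).
Proof. intros H. apply desc_lev in H. rewrite Hlev in H. lia. Qed.

Lemma desc_par y x : desc y x -> x <> y -> desc y (par x).
Proof. intros [m Hm] Hne. destruct m; simpl in *. contradiction.
  exists m. rewrite <- Nat.iter_succ_r. simpl. auto. Qed.

Lemma desc_of_par y x : desc y (par x) -> desc y x.
Proof. intros [m Hm]. exists (S m). rewrite Nat.iter_succ_r. auto. Qed.

Lemma desc_trans y1 y2 x : desc y1 y2 -> desc y2 x -> desc y1 x.
Proof. intros [m Hm] [n Hn]. exists (m + n)%nat. rewrite Nat.iter_add, Hn; auto. Qed.

Lemma desc_iter y x m : desc y x -> desc (Nat.iter m par y) x.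
Proof. intros [n Hn]. exists (m + n)%nat. rewrite Nat.iter_add, Hn; auto. Qed.

Lemma desc_child y c : desc y c -> ~ desc y (par c) -> c = y.
Proof. intros H1 H2. apply NNPP; intro Hn. apply H2, desc_par; auto. Qed.

Lemma subtree_cover_n n : forall y, lev y = n -> exists T, forall x, desc y x -> In x T.
Proof.
  induction n as [|n IH]; intros y Hy.
  - exists [y]. intros x Hx. left. apply desc_lev_eq in Hx; auto.
    pose proof (desc_lev _ _ Hx). lia.
  - assert (Hc : forall l, incl l (ch y) -> exists T, forall c x, In c l -> desc c x -> In x T).
    { induction l as [|c l IHl]; intros Hi.
      - exists []. intros c x [].
      - destruct IHl as [T1 HT1]. intros z Hz; apply Hi; right; auto.
        assert (Hcy : par c = y) by (apply Hch, Hi; left; auto).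
        destruct (IH c) as [T2 HT2]. rewrite <- Hcy, Hlev in Hy. lia.
        exists (T2 ++ T1). intros c' x [<-|Hc'] Hd; apply in_or_app; eauto. }
    destruct (Hc (ch y) (incl_refl _)) as [T HT].
    exists (y :: T). intros x [m Hm]. destruct m as [|m].
    + left; auto.
    + right. apply (HT (Nat.iter m par x)).
      * apply Hch. rewrite <- Nat.iter_succ. auto.
      * exists m; auto.
Qed.

Lemma subtree_list y : exists T, NoDup T /\ forall x, In x T <-> desc y x.
Proof.
  destruct (subtree_cover_n (lev y) y eq_refl) as [T0 HT0].
  destruct (exists_nodup_filter (desc y) T0) as [T [HT HiT]].
  exists T; split; auto. intros x; rewrite HiT; split; [tauto|]. intros; split; auto.
Qed.

Definition delta y : V -> Cplx := fun x => if dec (x = y) then Cone else C0.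
Definition chi y g : V -> Cplx := fun x => if dec (desc y x) then g x else C0.
Definition chC y : V -> Cplx := fun x => if dec (par x = y) then RtoC (lam x) else C0.

Lemma delta_same y : delta y y = Cone.
Proof. unfold delta; destruct (dec (y = y)); tauto. Qed.
Lemma delta_other y x : x <> y -> delta y x = C0.
Proof. unfold delta; destruct (dec (x = y)); tauto. Qed.

Lemma J_ext f g x : (forall y, f y = g y) -> J f x = J g x.
Proof. intros H. unfold J, Japply. rewrite !H. f_equal.
  apply Csum_ext_in. intros; rewrite H; auto. Qed.

Lemma J_add f g x : J (fun y => Cadd (f y) (g y)) x = Cadd (J f x) (J g x).
Proof. unfold J, Japply.
  rewrite (Csum_ext_in (ch x) _ (fun y => Cadd (Cmul (RtoC (lam y)) (f y)) (Cmul (RtoC (lam y)) (g y)))).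
  rewrite Csum_add. ring. intros; ring. Qed.

Lemma J_sub f g x : J (fun y => Csub (f y) (g y)) x = Csub (J f x) (J g x).
Proof. unfold J, Japply.
  rewrite (Csum_ext_in (ch x) _ (fun y => Csub (Cmul (RtoC (lam y)) (f y)) (Cmul (RtoC (lam y)) (g y)))).
  rewrite Csum_sub. ring. intros; ring. Qed.

Lemma J_scale c f x : J (fun y => Cmul c (f y)) x = Cmul c (J f x).
Proof. unfold J, Japply.
  rewrite (Csum_ext_in (ch x) _ (fun y => Cmul c (Cmul (RtoC (lam y)) (f y)))).
  rewrite Csum_scale. ring. intros; ring. Qed.

Lemma J_zero x : J fzero x = C0.
Proof. unfold J, Japply, fzero. rewrite Csum_zero. ring. intros; ring. Qed.

Lemma J_conj f x : J (fun y => Cconj (f y)) x = Cconj (J f x).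
Proof. unfold J, Japply. rewrite !Cconj_add, !Cconj_mul, !Cconj_RtoC.
  rewrite <- Csum_conj. f_equal. apply Csum_ext_in. intros. rewrite Cconj_mul, Cconj_RtoC; auto. Qed.

Lemma J_csum {W : Type} (K : list W) (F : W -> V -> Cplx) x :
  J (fun y => Csum K (fun k => F k y)) x = Csum K (fun k => J (F k) x).
Proof.
  induction K as [|k K IH]; simpl.
  - rewrite (J_ext _ fzero); [apply J_zero|]. intros; reflexivity.
  - rewrite J_add, IH. reflexivity.
Qed.

Lemma J_chi y g x :
  J (chi y g) x = Cadd (Csub (chi y (J g) x) (Cmul (delta y x) (Cmul (RtoC (lam y)) (g (par y)))))
                       (Cmul (delta (par y) x) (Cmul (RtoC (lam y)) (g y))).
Proof.
  unfold J, Japply, chi.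
  destruct (dec (desc y x)) as [Hd|Hd].
  -
    assert (Hx : x <> par y) by (intro; subst; apply (par_not_desc y); auto).
    rewrite (delta_other (par y) x Hx).
    assert (Hcs : Csum (ch x) (fun c => Cmul (RtoC (lam c)) (if dec (desc y c) then g c else C0))
                  = Csum (ch x) (fun c => Cmul (RtoC (lam c)) (g c))).
    { apply Csum_ext_in. intros c Hc. apply Hch in Hc. subst x.
      destruct (dec (desc y c)); auto. exfalso; apply n, desc_of_par; auto. }
    rewrite Hcs.
    destruct (classic (x = y)) as [->|Hne].
    + rewrite delta_same. destruct (dec (desc y (par y))) as [Hp|Hp].
      { exfalso; apply (par_not_desc y); auto. }
      ring.
    + rewrite (delta_other y x Hne). destruct (dec (desc y (par x))) as [Hp|Hp].
      * ring.
      * exfalso; apply Hp, desc_par; auto.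
  - assert (Hxy : x <> y) by (intro; subst; apply Hd, desc_refl).
    rewrite (delta_other y x Hxy).
    destruct (dec (desc y (par x))) as [Hp|Hp].
    { exfalso; apply Hd, desc_of_par; auto. }
    destruct (classic (x = par y)) as [->|Hne].
    + rewrite delta_same.
      rewrite (Csum_single (ch (par y)) _ y (Hnd _)).
      * destruct (dec (desc y y)) as [_|Hn]; [|exfalso; apply Hn, desc_refl]. ring.
      * apply Hch; auto.
      * intros c Hc Hcy. destruct (dec (desc y c)) as [Hdc|Hdc]; [|ring].
        apply Hch in Hc. exfalso. apply Hcy. apply desc_child; auto. rewrite Hc. apply par_not_desc.
    + rewrite (delta_other (par y) x Hne). rewrite Csum_zero. ring.
      intros c Hc. destruct (dec (desc y c)) as [Hdc|Hdc]; [|ring].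
      apply Hch in Hc. exfalso. apply Hne. rewrite <- Hc. f_equal.
      apply desc_child; auto. rewrite Hc. auto.
Qed.

Lemma J_delta_pt y x :
  J (delta y) x = Cadd (Cadd (Cmul (delta (par y) x) (RtoC (lam y))) (Cmul (delta y x) (RtoC (beta y)))) (chC y x).
Proof.
  unfold J, Japply.
  assert (E1 : Cmul (RtoC (lam x)) (delta y (par x)) = chC y x).
  { unfold chC, delta. destruct (dec (par x = y)); ring. }
  assert (E2 : Cmul (RtoC (beta x)) (delta y x) = Cmul (delta y x) (RtoC (beta y))).
  { unfold delta. destruct (dec (x = y)); [subst|]; ring. }
  assert (E3 : Csum (ch x) (fun c => Cmul (RtoC (lam c)) (delta y c)) = Cmul (delta (par y) x) (RtoC (lam y))).
  { destruct (classic (x = par y)) as [->|Hne].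
    - rewrite delta_same. rewrite (Csum_single _ _ y (Hnd _)).
      + rewrite delta_same; ring.
      + apply Hch; auto.
      + intros c _ Hc. rewrite delta_other; auto; ring.
    - rewrite delta_other; auto. rewrite Csum_zero. ring.
      intros c Hc. apply Hch in Hc. rewrite delta_other. ring.
      intro; subst; apply Hne; auto. }
  rewrite E1, E2, E3. ring.
Qed.

Definition nbhd y : list V := par y :: y :: ch y.

Lemma nbhd_nodup y : NoDup (nbhd y).
Proof.
  unfold nbhd. constructor; [|constructor].
  - intros [H|H]. apply (par_neq y); auto.
    apply Hch in H. pose proof (Hlev (par y)). pose proof (Hlev y). rewrite H in H0. lia.
  - intros H. apply Hch in H. apply (par_neq y); auto.
  - apply Hnd.
Qed.

Lemma J_delta_sum y g L : NoDup L -> incl (nbhd y) L ->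
  Csum L (fun x => Cmul (J (delta y) x) (g x)) = J g y.
Proof.
  intros HL Hi.
  rewrite (Csum_ext_in L _ (fun x => Cadd (Cadd (Cmul (delta (par y) x) (Cmul (RtoC (lam y)) (g (par y))))
                                              (Cmul (delta y x) (Cmul (RtoC (beta y)) (g y))))
                                        (Cmul (chC y x) (g x)))).
  2:{ intros x _. rewrite J_delta_pt.
      unfold delta. destruct (dec (x = par y)) as [e1|e1]; destruct (dec (x = y)) as [e2|e2].
      - exfalso. apply (par_neq y). congruence.
      - rewrite e1. ring.
      - rewrite e2. ring.
      - ring. }
  rewrite !Csum_add.
  rewrite (Csum_single L _ (par y) HL); [| apply Hi; left; auto |].
  2:{ intros x _ H. rewrite delta_other; auto. ring. }
  rewrite (Csum_single L (fun x => Cmul (delta y x) _) y HL); [| apply Hi; right; left; auto |].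
  2:{ intros x _ H. rewrite delta_other; auto. ring. }
  rewrite !delta_same.
  rewrite (Csum_support (ch y) L); auto.
  - unfold J, Japply. f_equal. ring.
    apply Csum_ext_in. intros c Hc. unfold chC. destruct (dec (par c = y)); [auto|].
    exfalso; apply n, Hch; auto.
  - apply Hnd.
  - intros c Hc. apply Hi. right; right; auto.
  - intros x _ Hx. unfold chC. destruct (dec (par x = y)); [|ring].
    exfalso; apply Hx, Hch; auto.
Qed.

Lemma f_decomp f K x : NoDup K -> (forall y, ~ In y K -> f y = C0) ->
  Csum K (fun y => Cmul (f y) (delta y x)) = f x.
Proof.
  intros HK Hf. destruct (classic (In x K)) as [Hx|Hx].
  - rewrite (Csum_single K _ x HK Hx). rewrite delta_same; ring.
    intros y _ Hy. rewrite delta_other; [ring|]. auto.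
  - rewrite Hf; auto. apply Csum_zero. intros y Hy. rewrite delta_other; [ring|].
    intro; subst; contradiction.
Qed.

Definition NK K : list V := flat_map nbhd K.

Lemma NK_incl K y : In y K -> incl (nbhd y) (NK K).
Proof. intros Hy z Hz. unfold NK. apply in_flat_map. eauto. Qed.

Lemma NK_self K : incl K (NK K).
Proof. intros y Hy. apply (NK_incl K y Hy). right; left; auto. Qed.

Lemma Sym f g K L : NoDup K -> (forall x, ~ In x K -> f x = C0) -> NoDup L -> incl (NK K) L ->
  Csum L (fun x => Cmul (J f x) (g x)) = Csum L (fun x => Cmul (f x) (J g x)).
Proof.
  intros HK Hf HL Hi.
  assert (EJ : forall x, J f x = Csum K (fun y => Cmul (f y) (J (delta y) x))).
  { intros x. rewrite (J_ext f (fun x => Csum K (fun y => Cmul (f y) (delta y x)))).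
    - rewrite J_csum. apply Csum_ext_in. intros; apply J_scale.
    - intros; symmetry; apply f_decomp; auto. }
  rewrite (Csum_ext_in L _ (fun x => Csum K (fun y => Cmul (f y) (Cmul (J (delta y) x) (g x))))).
  2:{ intros x _. rewrite EJ. rewrite <- Csum_scale_r. apply Csum_ext_in. intros; ring. }
  rewrite (Csum_exchange L K (fun x y => Cmul (f y) (Cmul (J (delta y) x) (g x)))).
  rewrite (Csum_ext_in K _ (fun y => Cmul (f y) (J g y))).
  2:{ intros y Hy. rewrite Csum_scale. f_equal. apply J_delta_sum; auto.
      intros z Hz. apply Hi, (NK_incl K y Hy); auto. }
  symmetry. apply Csum_support; auto.
  - intros z Hz; apply Hi, NK_self; auto.
  - intros x _ Hx. rewrite Hf; auto. ring.
Qed.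

Lemma Sym_conj f g K L : NoDup K -> (forall x, ~ In x K -> f x = C0) -> NoDup L -> incl (NK K) L ->
  Csum L (fun x => Cmul (Cconj (J f x)) (g x)) = Csum L (fun x => Cmul (Cconj (f x)) (J g x)).
Proof.
  intros HK Hf HL Hi.
  rewrite <- (Sym (fun x => Cconj (f x)) g K L); auto.
  - apply Csum_ext_in. intros; rewrite J_conj; auto.
  - intros x Hx; rewrite Hf; auto; apply Cconj_C0.
Qed.

End Tree.

End P6.
Import P6.

Module P7.

Section Vfacts.
Context {V : Type} (par : V -> V) (lev : V -> nat) (ch : V -> list V)
  (Htree : leveled_tree par lev ch) (lam beta : V -> R) (Hlam : forall x, 0 < lam x)
  (z : Cplx) (Hz : im z <> 0) (v : V -> Cplx) (Hv0 : exists x, v x <> C0)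
  (Hv : forall x, Japply par ch lam beta v x = Cmul z (v x)).
Implicit Types (f g u a : V -> Cplx) (L K : list V) (x y w t : V).

Local Notation J := (Japply par ch lam beta).
Definition Jz (f : V -> Cplx) (x : V) : Cplx := Csub (Japply par ch lam beta f x) (Cmul z (f x)).
Local Notation dsc := (desc par).
Local Notation chi := (P6.chi par).

Lemma Csum_RtoC L (a : V -> R) : Csum L (fun x => RtoC (a x)) = RtoC (Rsum L a).
Proof. induction L; simpl. apply Ceq; simpl; ring. rewrite IHL, RtoC_add; auto. Qed.

Lemma chi_support y g T : (forall x, In x T <-> dsc y x) -> forall x, ~ In x T -> chi y g x = C0.
Proof. intros HT x Hx. unfold P6.chi. destruct (dec (P6.desc par y x)); auto.
  exfalso; apply Hx, HT; auto. Qed.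

Lemma chi_finsupp y g : finsupp (chi y g).
Proof. destruct (subtree_list par lev ch Htree y) as [T [HT HiT]]. exists T.
  apply (chi_support y g T HiT). Qed.

Lemma chi_sum y h k T L : NoDup T -> (forall x, In x T <-> dsc y x) -> NoDup L -> incl T L ->
  Csum L (fun x => Cmul (chi y h x) (k x)) = Csum T (fun x => Cmul (h x) (k x)).
Proof.
  intros HT HiT HL Hi. rewrite (Csum_support T L); auto.
  - apply Csum_ext_in. intros x Hx. unfold P6.chi. destruct (dec (P6.desc par y x)); auto.
    exfalso; apply n, HiT; auto.
  - intros x _ Hx. rewrite (chi_support y h T HiT x Hx). ring.
Qed.

Lemma delta_sum y k L : NoDup L -> In y L -> Csum L (fun x => Cmul (delta y x) (k x)) = k y.
Proof. intros HL Hy. rewrite (Csum_single L _ y HL Hy).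
  - rewrite delta_same; ring.
  - intros x _ Hx. rewrite delta_other; auto; ring. Qed.

Lemma Jz_chi y g t :
  Jz (chi y g) t = Cadd (Csub (chi y (Jz g) t) (Cmul (delta y t) (Cmul (RtoC (lam y)) (g (par y)))))
                       (Cmul (delta (par y) t) (Cmul (RtoC (lam y)) (g y))).
Proof.
  unfold Jz. rewrite (J_chi par lev ch Htree lam beta y g t).
  unfold P6.chi. destruct (dec (P6.desc par y t)); ring.
Qed.

Lemma Jz_v t : Jz v t = C0.
Proof. unfold Jz. rewrite Hv. ring. Qed.

Lemma Jz_conjv t : Jz (fun x => Cconj (v x)) t = Cmul (Csub (Cconj z) z) (Cconj (v t)).
Proof. unfold Jz. rewrite (J_conj par ch lam beta). rewrite Hv, Cconj_mul. ring. Qed.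

Lemma Jz_add f g t : Jz (fun x => Cadd (f x) (g x)) t = Cadd (Jz f t) (Jz g t).
Proof. unfold Jz. rewrite (J_add par ch lam beta). ring. Qed.
Lemma Jz_sub f g t : Jz (fun x => Csub (f x) (g x)) t = Csub (Jz f t) (Jz g t).
Proof. unfold Jz. rewrite (J_sub par ch lam beta). ring. Qed.
Lemma Jz_scale c f t : Jz (fun x => Cmul c (f x)) t = Cmul c (Jz f t).
Proof. unfold Jz. rewrite (J_scale par ch lam beta). ring. Qed.
Lemma Jz_zero t : Jz fzero t = C0.
Proof. unfold Jz. rewrite (J_zero par ch lam beta). unfold fzero; ring. Qed.
Lemma Jz_ext f g t : (forall x, f x = g x) -> Jz f t = Jz g t.
Proof. intros H. unfold Jz. rewrite (J_ext par ch lam beta f g t H), H. auto. Qed.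

Lemma Green y T : NoDup T -> (forall x, In x T <-> dsc y x) ->
  Cmul (Csub z (Cconj z)) (RtoC (nsum T v)) =
  Cmul (RtoC (lam y)) (Csub (Cmul (Cconj (v y)) (v (par y))) (Cmul (Cconj (v (par y))) (v y))).
Proof.
  intros HT HiT.
  destruct (exists_nodup_cover (NK par ch T)) as [L [HL HiL]].
  assert (Hi : incl (NK par ch T) L) by (intros t Ht; apply HiL; auto).
  assert (HyT : In y T) by (apply HiT, (desc_refl par)).
  assert (HTL : incl T L) by (intros t Ht; apply Hi, (NK_self par ch T t Ht)).
  assert (HyL : In y L) by auto.
  assert (HpL : In (par y) L) by (apply Hi, (NK_incl par ch T y HyT); left; auto).
  pose proof (Sym par lev ch Htree lam beta (chi y (fun x => Cconj (v x))) v T L HT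
    (chi_support y _ T HiT) HL Hi) as HS.
  rewrite (Csum_ext_in L (fun x => Cmul (Japply par ch lam beta (chi y (fun x0 => Cconj (v x0))) x) (v x))
     (fun x => Cadd (Cadd (Cmul (chi y (fun t => Cmul (Cconj z) (Cconj (v t))) x) (v x))
                          (Copp (Cmul (delta y x) (Cmul (Cmul (RtoC (lam y)) (Cconj (v (par y)))) (v x)))))
                    (Cmul (delta (par y) x) (Cmul (Cmul (RtoC (lam y)) (Cconj (v y))) (v x))))) in HS.
  2:{ intros x _. rewrite (J_chi par lev ch Htree lam beta).
      unfold P6.chi. destruct (dec (P6.desc par y x)).
      - rewrite (J_conj par ch lam beta), Hv, Cconj_mul. ring.
      - ring. }
  rewrite !Csum_add, Csum_opp in HS.
  rewrite (chi_sum y _ _ T L HT HiT HL HTL) in HS.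
  rewrite (delta_sum y _ L HL HyL), (delta_sum (par y) _ L HL HpL) in HS.
  rewrite (Csum_ext_in L _ (fun x => Cmul (chi y (fun t => Cconj (v t)) x) (Cmul z (v x)))) in HS.
  2:{ intros; rewrite Hv; auto. }
  rewrite (chi_sum y _ _ T L HT HiT HL HTL) in HS.
  rewrite (Csum_ext_in T _ (fun x => Cmul (Cconj z) (RtoC (Cnorm2 (v x))))) in HS.
  2:{ intros; rewrite <- Cmul_conj_self; ring. }
  rewrite (Csum_ext_in T (fun x => Cmul (Cconj (v x)) (Cmul z (v x))) (fun x => Cmul z (RtoC (Cnorm2 (v x))))) in HS.
  2:{ intros; rewrite <- Cmul_conj_self; ring. }
  rewrite !Csum_scale, Csum_RtoC in HS. fold (nsum T v) in HS.
  apply Csub_zero_eq.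
  match type of HS with ?l = ?r =>
    transitivity (Csub r l); [ring|rewrite HS; ring] end.
Qed.

Lemma Rsum_nonneg_zero L (a : V -> R) : (forall t, 0 <= a t) -> Rsum L a = 0 -> forall t, In t L -> a t = 0.
Proof.
  induction L as [|b L IH]; simpl; intros Hp H t Ht; [contradiction|].
  pose proof (Rsum_nonneg L a (fun x _ => Hp x)). pose proof (Hp b).
  destruct Ht as [<-|Ht]. lra. apply IH; auto. lra.
Qed.

Lemma Cmul_zero_r (a b : Cplx) : a <> C0 -> Cmul a b = C0 -> b = C0.
Proof. intros Ha H. destruct (classic (b = C0)) as [|Hb]; auto.
  exfalso. apply (Cmul_neq0 a b Ha Hb H). Qed.

Lemma Z1 y : v y = C0 -> forall t, dsc y t -> v t = C0.
Proof.
  intros Hy t Ht. destruct (subtree_list par lev ch Htree y) as [T [HT HiT]].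
  pose proof (Green y T HT HiT) as G. rewrite Hy in G.
  replace (Cmul (RtoC (lam y)) (Csub (Cmul (Cconj C0) (v (par y))) (Cmul (Cconj (v (par y))) C0))) with C0 in G
    by (apply Ceq; simpl; ring).
  apply Cmul_zero_r in G; [|apply zsub_conj_neq0; auto].
  assert (HS : nsum T v = 0) by (injection G; auto).
  apply Cnorm2_zero. apply (Rsum_nonneg_zero T (fun x => Cnorm2 (v x))); auto.
  intros; apply Cnorm2_nonneg. apply HiT; auto.
Qed.

Lemma Z2 y : v y = C0 -> (forall t, dsc y t -> v t = C0) -> v (par y) = C0.
Proof.
  intros Hy Ht. pose proof (Hv y) as H. unfold Japply in H. rewrite Hy in H.
  rewrite Csum_zero in H.
  2:{ intros c Hc. rewrite Ht. ring. exists 1%nat. simpl. apply (Hch par lev ch Htree); auto. }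
  apply (Cmul_zero_r (RtoC (lam y))). apply RtoC_neq0. pose proof (Hlam y); lra.
  assert (E : Cmul (RtoC (lam y)) (v (par y)) = Cmul z C0) by (rewrite <- H; apply Ceq; simpl; ring).
  rewrite E; ring.
Qed.

Lemma NV x : v x <> C0.
Proof.
  intros H0.
  assert (A : forall m, v (Nat.iter m par x) = C0).
  { induction m; simpl; auto. apply Z2; auto. apply Z1; auto. }
  destruct Hv0 as [t Ht]. apply Ht.
  destruct (Hconn par lev ch Htree x t) as [m [n Hmn]].
  apply (Z1 (Nat.iter m par x)); auto. exists n; auto.
Qed.

Lemma RtoC_inv r : r <> 0 -> RtoC (/ r) = Cinv (RtoC r).
Proof. intros H. apply Ceq; unfold Cinv, Cnorm2, RtoC; simpl; field; auto. Qed.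

Lemma chi_Jz_v w t : chi w (Jz v) t = C0.
Proof. unfold P6.chi. destruct (dec (desc par w t)); auto. apply Jz_v. Qed.

Lemma chi_Jz_conjv w t : chi w (Jz (fun x => Cconj (v x))) t =
  Cmul (Csub (Cconj z) z) (chi w (fun x => Cconj (v x)) t).
Proof. unfold P6.chi. destruct (dec (desc par w t)). apply Jz_conjv. ring. Qed.

Lemma lam_neq0 y : RtoC (lam y) <> C0.
Proof. apply RtoC_neq0. pose proof (Hlam y); lra. Qed.

Lemma chain x N : exists Phi, finsupp Phi /\ forall t,
  Jz Phi t = Csub (delta x t) (Cmul (Cdiv (v x) (v (Nat.iter N par x))) (delta (Nat.iter N par x) t)).
Proof.
  induction N as [|N [Phi [HPf HP]]].
  - exists fzero. split; [apply finsupp_zero|]. intros t. rewrite Jz_zero. simpl.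
    field. apply NV.
  - set (w := Nat.iter N par x) in *.
    set (c := Cdiv (Copp (Cdiv (v x) (v w))) (Cmul (RtoC (lam w)) (v (par w)))).
    exists (fun t => Cadd (Phi t) (Cmul c (chi w v t))). split.
    + apply finsupp_add; auto. apply finsupp_scale, chi_finsupp.
    + intros t. rewrite Jz_add, Jz_scale, HP, Jz_chi, chi_Jz_v. simpl. fold w.
      unfold c. field. repeat split; try apply NV; apply lam_neq0.
Qed.

Lemma FIN w T : NoDup T -> (forall t, In t T <-> dsc w t) -> 0 < nsum T v ->
  exists Psi, finsupp Psi /\ forall t,
  Jz Psi t = Csub (delta w t) (Cmul (Cmul (v w) (RtoC (/ nsum T v))) (chi w (fun s => Cconj (v s)) t)).
Proof.
  intros HT HiT HS.
  set (S := nsum T v) in *.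
  set (k := Cinv (Cmul (Csub z (Cconj z)) (RtoC S))).
  exists (fun t => Cmul k (Csub (Cmul (v w) (chi w (fun s => Cconj (v s)) t)) (Cmul (Cconj (v w)) (chi w v t)))).
  split.
  - apply finsupp_scale, finsupp_sub; apply finsupp_scale, chi_finsupp.
  - intros t. rewrite Jz_scale, Jz_sub, !Jz_scale, !Jz_chi, chi_Jz_v, chi_Jz_conjv.
    pose proof (Green w T HT HiT) as G. fold S in G.
    set (D := Cmul (RtoC (lam w)) (Csub (Cmul (Cconj (v w)) (v (par w))) (Cmul (Cconj (v (par w))) (v w)))) in *.
    transitivity (Cmul k (Cadd (Cmul (Copp (Csub z (Cconj z))) (Cmul (v w) (chi w (fun s => Cconj (v s)) t)))
                              (Cmul (delta w t) D))).
    { unfold D. ring. }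
    rewrite <- G. unfold k. rewrite RtoC_inv by lra.
    field. split. apply RtoC_neq0; lra. apply zsub_conj_neq0; auto.
Qed.

Lemma common_anc x L : exists N, forall t, In t L -> dsc (Nat.iter N par x) t.
Proof.
  induction L as [|t L [N1 HN1]].
  - exists 0%nat. intros t [].
  - destruct (Hconn par lev ch Htree x t) as [m [n Hmn]].
    exists (N1 + m)%nat. intros s [<-|Hs].
    + rewrite Nat.iter_add. apply desc_iter. exists n; auto.
    + rewrite Nat.add_comm, Nat.iter_add. apply desc_iter. auto.
Qed.

Lemma UNB : ~ l2 v -> forall x M, exists N T, NoDup T /\ (forall t, In t T <-> dsc (Nat.iter N par x) t)
  /\ M < nsum T v.
Proof.
  intros Hn x M.
  assert (exists L, NoDup L /\ M < nsum L v) as [L [HL HM]].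
  { apply NNPP; intro H. apply Hn. exists M. intros L HL. apply Rnot_lt_le. intro Hc. apply H. eauto. }
  destruct (common_anc x L) as [N HN].
  destruct (subtree_list par lev ch Htree (Nat.iter N par x)) as [T [HT HiT]].
  exists N, T. split; auto. split; auto.
  eapply Rlt_le_trans; eauto. apply Rsum_le_incl; auto.
  - intros t Ht; apply HiT; auto.
  - intros; apply Cnorm2_nonneg.
Qed.

Lemma density : ~ l2 v -> forall x eps, 0 < eps -> exists Phi, finsupp Phi /\
  l2_bound (fun t => Csub (Jz Phi t) (delta x t)) eps.
Proof.
  intros Hn x eps Heps.
  destruct (UNB Hn x (Cnorm2 (v x) / eps)) as [N [T [HT [HiT HM]]]].
  set (w := Nat.iter N par x) in *. set (S := nsum T v) in *.
  assert (HS : 0 < S).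
  { eapply Rle_lt_trans; [|apply HM]. apply Rmult_le_pos. apply Cnorm2_nonneg.
    left; apply Rinv_0_lt_compat; auto. }
  destruct (chain x N) as [Phi1 [HP1 HJ1]]. fold w in HJ1.
  destruct (FIN w T HT HiT HS) as [Psi [HP2 HJ2]]. fold S in HJ2.
  set (c := Cdiv (v x) (v w)).
  exists (fun t => Cadd (Phi1 t) (Cmul c (Psi t))). split.
  - apply finsupp_add; auto. apply finsupp_scale; auto.
  - apply (l2_bound_ext (fun t => Cmul (Copp (Cmul (v x) (RtoC (/ S)))) (chi w (fun s => Cconj (v s)) t))).
    + intros t. rewrite Jz_add, Jz_scale, HJ1, HJ2. unfold c. field. apply NV.
    + eapply l2_bound_mono; [|apply l2_bound_scale].
      2:{ eapply l2_bound_mono; [|apply (finsupp_l2_bound _ T HT (chi_support w _ T HiT))].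
          apply Req_le. unfold nsum. apply Rsum_ext_in. intros t Ht.
          unfold P6.chi. destruct (dec (desc par w t)). apply Cnorm2_conj. exfalso; apply n, HiT; auto. }
      rewrite Cnorm2_opp, Cnorm2_mul, Cnorm2_RtoC.
      change (Rsum T (fun t => Cnorm2 (v t))) with S.
      assert (H1 : Cnorm2 (v x) < eps * S).
      { apply (Rmult_lt_compat_l eps) in HM; auto.
        replace (eps * (Cnorm2 (v x) / eps)) with (Cnorm2 (v x)) in HM by (field; lra). lra. }
      replace (Cnorm2 (v x) * (/ S * / S) * S) with (Cnorm2 (v x) * / S) by (field; lra).
      apply Rlt_le. apply (Rmult_lt_reg_r S); auto.
      replace (Cnorm2 (v x) * / S * S) with (Cnorm2 (v x)) by (field; lra). lra.
Qed.

Lemma energy Phi B : finsupp Phi -> l2_bound (Jz Phi) B -> l2_bound Phi (B / (im z * im z)).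
Proof.
  intros Hf HB.
  destruct (finsupp_nodup Phi Hf) as [K [HK HKz]].
  destruct (exists_nodup_cover (NK par ch K)) as [L [HL HiL]].
  assert (Hi : incl (NK par ch K) L) by (intros t Ht; apply HiL; auto).
  assert (HKL : incl K L) by (intros t Ht; apply Hi, NK_self; auto).
  set (P := nsum L Phi).
  set (S0 := Csum L (fun x => Cmul (Cconj (Phi x)) (J Phi x))).
  pose proof (Sym_conj par lev ch Htree lam beta Phi Phi K L HK HKz HL Hi) as HS.
  fold S0 in HS.
  assert (HC : Cconj S0 = S0).
  { transitivity (Csum L (fun x => Cmul (Cconj (J Phi x)) (Phi x))); [|exact HS].
    unfold S0. rewrite <- Csum_conj. apply Csum_ext_in. intros.
    rewrite Cconj_mul, Cconj_invol. ring. }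
  assert (Him0 : im S0 = 0) by (assert (h := f_equal im HC); simpl in h; lra).
  set (S1 := Csum L (fun x => Cmul (Cconj (Phi x)) (Jz Phi x))).
  assert (E1 : S1 = Csub S0 (Cmul z (RtoC P))).
  { unfold S1, S0, P, nsum. rewrite <- Csum_RtoC, <- Csum_scale, <- Csum_sub.
    apply Csum_ext_in. intros. unfold Jz. rewrite <- Cmul_conj_self. ring. }
  assert (HimS1 : im S1 = - (im z * P)) by (rewrite E1; simpl; lra).
  assert (HCS : Cnorm2 S1 <= P * B).
  { unfold S1. eapply Rle_trans. apply (CS L (fun x => Cconj (Phi x)) (Jz Phi)). cbv beta.
    rewrite (Rsum_ext_in L (fun x => Cnorm2 (Cconj (Phi x))) (fun x => Cnorm2 (Phi x))).
    2:{ intros; apply Cnorm2_conj. }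
    apply Rmult_le_compat_l. apply nsum_nonneg. apply HB; auto. }
  pose proof (im_le_norm S1) as Hn. rewrite HimS1 in Hn.
  assert (HP0 : 0 <= P) by apply nsum_nonneg.
  assert (HB0 : 0 <= B) by (eapply l2_bound_nonneg; eauto).
  assert (Hz2 : 0 < im z * im z) by (destruct (Rtotal_order (im z) 0) as [h|[h|h]]; [nra|contradiction|nra]).
  assert (HPB : P <= B / (im z * im z)).
  { destruct HP0 as [HP0|HP0].
    - apply (Rmult_le_reg_r (im z * im z)); auto. unfold Rdiv.
      rewrite Rmult_assoc, Rinv_l, Rmult_1_r by lra.
      apply (Rmult_le_reg_l P); auto. nra.
    - rewrite <- HP0. apply Rmult_le_pos; auto. left; apply Rinv_0_lt_compat; auto. }
  intros L' HL'. eapply Rle_trans; [|apply HPB].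
  eapply Rle_trans. apply (Rsum_restrict_le K L'); auto.
  - intros; apply Cnorm2_nonneg.
  - intros x Hx; rewrite HKz; auto; apply Cnorm2_C0.
  - unfold P, nsum. apply Req_le. symmetry. apply Rsum_support; auto.
    intros x _ Hx; rewrite HKz; auto; apply Cnorm2_C0.
Qed.

End Vfacts.

End P7.
Import P7.

Module P8.

Lemma small_inv e : 0 < e -> exists N, forall k, (N <= k)%nat -> / (INR k + 1) < e.
Proof.
  intros He. destruct (INR_unbounded (/ e)) as [N HN]. exists N. intros k Hk.
  apply le_INR in Hk. pose proof (pos_INR N).
  assert (0 < INR k + 1) by lra.
  apply (Rmult_lt_reg_l (INR k + 1)); auto. rewrite Rinv_r by lra.
  apply (Rmult_lt_reg_l (/ e)). apply Rinv_0_lt_compat; auto.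
  replace (/ e * ((INR k + 1) * e)) with (INR k + 1) by (field; lra). lra.
Qed.

Lemma inv_pos k : 0 < / (INR k + 1).
Proof. apply Rinv_0_lt_compat. pose proof (pos_INR k). lra. Qed.

Lemma l2_conv_const {V : Type} (u : V -> Cplx) : l2_conv (fun _ => u) u.
Proof. intros e He. exists 0%nat. intros n _. apply l2_bound_zero'; [|lra]. intros; apply Ceq; simpl; ring. Qed.

Section Main.
Context {V : Type} (par : V -> V) (lev : V -> nat) (ch : V -> list V)
  (Htree : leveled_tree par lev ch) (lam beta : V -> R) (Hlam : forall x, 0 < lam x)
  (z : Cplx) (Hz : im z <> 0) (v : V -> Cplx) (Hv0 : exists x, v x <> C0)
  (Hv : forall x, Japply par ch lam beta v x = Cmul z (v x)).
Implicit Types (f g u w a : V -> Cplx) (L K : list V) (x y t : V).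

Local Notation J := (Japply par ch lam beta).
Local Notation T := (J_fin par ch lam beta).
Local Notation Jz := (Jz par ch lam beta z).

Lemma J_finsupp f : finsupp f -> finsupp (J f).
Proof.
  intros Hf. destruct (finsupp_nodup f Hf) as [K [HK Hz0]].
  exists (NK par ch K). intros x Hx. unfold Japply.
  rewrite (Hz0 x), (Hz0 (par x)), Csum_zero.
  - apply Ceq; simpl; ring.
  - intros c Hc. rewrite Hz0. apply Ceq; simpl; ring.
    intro Hck. apply Hx. apply (NK_incl par ch K c Hck). left. apply (Hch par lev ch Htree); auto.
  - intro Hk. apply Hx. apply (NK_incl par ch K (par x) Hk). right; right. apply (Hch par lev ch Htree); auto.
  - intro Hk. apply Hx. apply NK_self; auto.
Qed.

Lemma T_l2 f g : T f g -> l2 f /\ l2 g.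
Proof.
  intros [Hf Hg]. split. apply finsupp_l2; auto.
  apply finsupp_l2. destruct (J_finsupp f Hf) as [K HK]. exists K. intros x Hx. rewrite Hg; auto.
Qed.

Lemma closure_l2 u w : closure T u w -> l2 u /\ l2 w.
Proof.
  intros [fn [gn [HT [Hf Hg]]]]. split.
  - apply (l2_conv_l2 fn); auto. intros n; apply (T_l2 _ _ (HT n)).
  - apply (l2_conv_l2 gn); auto. intros n; apply (T_l2 _ _ (HT n)).
Qed.

Lemma closure_sym u w f g : closure T u w -> closure T f g ->
  forall s1 s2, inner g u s1 -> inner f w s2 -> s1 = s2.
Proof.
  intros Huw Hfg. pose proof (closure_l2 _ _ Huw) as [Hu Hw]. pose proof (closure_l2 _ _ Hfg) as [Hf Hg].
  destruct Huw as [un [wn [HTu [Cu Cw]]]]. destruct Hfg as [fn [gn [HTf [Cf Cg]]]].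
  apply (pair_eq f g u w fn gn un wn); auto.
  intros n m. destruct (HTf n) as [Hfn Hgn]. destruct (HTu m) as [Hun Hwn].
  destruct (finsupp_nodup _ Hfn) as [K [HK HKz]].
  exists (NK par ch K). intros L HL Hi.
  rewrite (Csum_ext_in L (fun x => Cmul (Cconj (gn n x)) (un m x)) (fun x => Cmul (Cconj (J (fn n) x)) (un m x))).
  2:{ intros; rewrite Hgn; auto. }
  rewrite (Sym_conj par lev ch Htree lam beta (fn n) (un m) K L HK HKz HL Hi).
  apply Csum_ext_in. intros; rewrite Hwn; auto.
Qed.

Lemma v_adjoint : l2 v -> adjoint (closure T) v (fun x => Cmul z (v x)).
Proof.
  intros Hl. split; [auto|split; [apply l2_scale; auto|]].
  intros f g Hfg. pose proof (closure_l2 _ _ Hfg) as [Hf Hg].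
  destruct Hfg as [fn [gn [HTf [Cf Cg]]]].
  apply (pair_eq f g v _ fn gn (fun _ => v) (fun _ x => Cmul z (v x))); auto.
  - apply l2_scale; auto.
  - apply l2_conv_const.
  - apply (l2_conv_const (fun x => Cmul z (v x))).
  - intros n m. destruct (HTf n) as [Hfn Hgn].
    destruct (finsupp_nodup _ Hfn) as [K [HK HKz]].
    exists (NK par ch K). intros L HL Hi.
    rewrite (Csum_ext_in L (fun x => Cmul (Cconj (gn n x)) (v x)) (fun x => Cmul (Cconj (J (fn n) x)) (v x))).
    2:{ intros; rewrite Hgn; auto. }
    rewrite (Sym_conj par lev ch Htree lam beta (fn n) v K L HK HKz HL Hi).
    apply Csum_ext_in. intros; rewrite Hv; auto.
Qed.

Lemma v_not_closure : ~ closure T v (fun x => Cmul z (v x)).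
Proof.
  intros [fn [gn [HTf [Cf Cg]]]].
  destruct Hv0 as [x0 Hx0]. apply Hx0. apply Cnorm2_small_zero. intros e He.
  set (z2 := Cnorm2 z). assert (Hz2 : 0 <= z2) by apply Cnorm2_nonneg.
  assert (Hiz : 0 < im z * im z) by (destruct (Rtotal_order (im z) 0) as [h|[h|h]]; [nra|contradiction|nra]).
  set (d := e / 4 * (im z * im z) / (2 + 2 * z2 + 1)).
  assert (Hd : 0 < d) by (unfold d; apply Rdiv_lt_0_compat; [nra|lra]).
  set (d' := Rmin d (e / 4)).
  assert (Hd' : 0 < d') by (unfold d'; apply Rmin_glb_lt; lra).
  destruct (Cf d' Hd') as [N1 HN1]. destruct (Cg d' Hd') as [N2 HN2].
  set (n := (N1 + N2)%nat).
  specialize (HN1 n ltac:(unfold n; lia)). specialize (HN2 n ltac:(unfold n; lia)).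
  destruct (HTf n) as [Hfn Hgn].
  assert (HJ : l2_bound (Jz (fn n)) (2 * d' + 2 * (z2 * d'))).
  { eapply l2_bound_ext; [|apply (l2_bound_sub _ _ _ _ HN2 (l2_bound_scale z _ _ HN1))].
    intros x. unfold P7.Jz. rewrite <- Hgn. apply Ceq; simpl; ring. }
  pose proof (energy par lev ch Htree lam beta z Hz (fn n) _ Hfn HJ) as HE.
  pose proof (l2_bound_point _ _ x0 HE). pose proof (l2_bound_point _ _ x0 HN1).
  pose proof (Cnorm2_sub (fn n x0) (Csub (fn n x0) (v x0))).
  replace (Csub (fn n x0) (Csub (fn n x0) (v x0))) with (v x0) in H1 by ring.
  assert (Hdd : d' <= d) by apply Rmin_l. assert (Hde : d' <= e / 4) by apply Rmin_r.
  assert (B1 : (2 * d' + 2 * (z2 * d')) / (im z * im z) <= e / 4).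
  { apply (Rmult_le_reg_r (im z * im z)); auto. unfold Rdiv.
    rewrite Rmult_assoc, Rinv_l, Rmult_1_r by lra.
    assert (d * (2 + 2 * z2 + 1) = e / 4 * (im z * im z)) by (unfold d; field; lra).
    nra. }
  lra.
Qed.

End Main.

End P8.
Import P8.

Module P9.

Section Hard.
Context {V : Type} (par : V -> V) (lev : V -> nat) (ch : V -> list V)
  (Htree : leveled_tree par lev ch) (lam beta : V -> R) (Hlam : forall x, 0 < lam x)
  (z : Cplx) (Hz : im z <> 0) (v : V -> Cplx) (Hv0 : exists x, v x <> C0)
  (Hv : forall x, Japply par ch lam beta v x = Cmul z (v x)).
Implicit Types (f g u w a h : V -> Cplx) (L K : list V) (x y : V).

Local Notation J := (Japply par ch lam beta).
Local Notation T := (J_fin par ch lam beta).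
Local Notation Jz := (Jz par ch lam beta z).

Definition DENS := density par lev ch Htree lam beta Hlam z Hz v Hv0 Hv.

Lemma delta_finsupp x : finsupp (delta x).
Proof. exists [x]. intros y Hy. apply delta_other. intro; subst; apply Hy; left; auto. Qed.

Lemma J_delta_real x y : Cconj (J (delta x) y) = J (delta x) y.
Proof.
  rewrite <- (J_conj par ch lam beta). apply (J_ext par ch lam beta). intros s.
  unfold delta. destruct (dec (s = x)); [apply Cconj_C1|apply Cconj_C0].
Qed.

Lemma J_delta_vanish x y : ~ In y (nbhd par ch x) -> J (delta x) y = C0.
Proof.
  intros Hy. rewrite (J_delta_pt par lev ch Htree lam beta).
  rewrite !delta_other.
  - unfold chC. destruct (dec (par y = x)).
    + exfalso. apply Hy. right; right. apply (Hch par lev ch Htree); auto.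
    + ring.
  - intro; subst; apply Hy; right; left; auto.
  - intro; subst; apply Hy; left; auto.
Qed.

Lemma adj_pointwise u w : adjoint (closure T) u w -> forall x, w x = J u x.
Proof.
  intros [Hu [Hw Had]] x.
  assert (Hcl : closure T (delta x) (J (delta x))).
  { exists (fun _ => delta x), (fun _ => J (delta x)). split; [|split; apply l2_conv_const].
    intros n. split; [apply delta_finsupp|auto]. }
  symmetry. apply (Had _ _ Hcl).
  - unfold inner.
    assert (E : Csum (nbhd par ch x) (fun y => Cmul (Cconj (J (delta x) y)) (u y)) = J u x).
    { rewrite (Csum_ext_in _ _ (fun y => Cmul (J (delta x) y) (u y))).
      - apply (J_delta_sum par lev ch Htree); auto. apply (nbhd_nodup par lev ch Htree). apply incl_refl.
      - intros; rewrite J_delta_real; auto. }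
    rewrite <- E. apply has_sum_fin. apply (nbhd_nodup par lev ch Htree).
    intros y Hy. rewrite J_delta_vanish; auto. rewrite Cconj_C0; ring.
  - unfold inner.
    assert (E : Csum [x] (fun y => Cmul (Cconj (delta x y)) (w y)) = w x).
    { simpl. rewrite delta_same, Cconj_C1. ring. }
    rewrite <- E. apply has_sum_fin. constructor; [simpl; tauto|constructor].
    intros y Hy. rewrite delta_other. rewrite Cconj_C0; ring. intro; subst; apply Hy; left; auto.
Qed.

Lemma dens_fin : ~ l2 v -> forall K t, NoDup K -> (forall s, ~ In s K -> t s = C0) ->
  forall eps, 0 < eps -> exists Phi, finsupp Phi /\ l2_bound (fun s => Csub (Jz Phi s) (t s)) eps.
Proof.
  intros Hn K. induction K as [|k K IH]; intros t HK Ht eps He.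
  - exists fzero. split; [apply finsupp_zero|]. apply l2_bound_zero'; [|lra].
    intros s. rewrite Jz_zero, Ht; auto. ring.
  - inversion HK; subst.
    set (t' := fun s => if dec (s = k) then C0 else t s).
    destruct (IH t' H2) with (eps := eps / 4) as [P' [HP'f HP']].
    { intros s Hs. unfold t'. destruct (dec (s = k)); auto. apply Ht. intros [->|Hs']; auto. }
    { lra. }
    set (ck := Cnorm2 (t k)). assert (Hck : 0 <= ck) by apply Cnorm2_nonneg.
    destruct (DENS Hn k (eps / (4 * (ck + 1)))) as [Pk [HPkf HPk]].
    { apply Rdiv_lt_0_compat; lra. }
    exists (fun s => Cadd (Cmul (t k) (Pk s)) (P' s)). split.
    + apply finsupp_add; auto. apply finsupp_scale; auto.
    + eapply l2_bound_mono; [|eapply l2_bound_ext; [|apply (l2_bound_add _ _ _ _ (l2_bound_scale (t k) _ _ HPk) HP')]].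
      * fold ck. assert (ck * (eps / (4 * (ck + 1))) <= eps / 4).
        { apply (Rmult_le_reg_r (4 * (ck + 1))). lra.
          replace (ck * (eps / (4 * (ck + 1))) * (4 * (ck + 1))) with (ck * eps) by (field; lra). nra. }
        lra.
      * intros s. rewrite Jz_add, Jz_scale. unfold t'.
        destruct (dec (s = k)) as [->|Hsk].
        -- rewrite delta_same. ring.
        -- rewrite delta_other; auto. ring.
Qed.

Lemma approx_h h : ~ l2 v -> l2 h -> forall eps, 0 < eps ->
  exists Phi, finsupp Phi /\ l2_bound (fun s => Csub (Jz Phi s) (h s)) eps.
Proof.
  intros Hn Hh eps He.
  destruct (l2_tail h Hh (eps / 4)) as [K [HK HKb]]; [lra|].
  destruct (dens_fin Hn K (chiL K h) HK) with (eps := eps / 4) as [P [HPf HP]].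
  { intros s Hs. unfold chiL. destruct (dec (In s K)); tauto. }
  { lra. }
  exists P. split; auto.
  eapply l2_bound_mono; [|eapply l2_bound_ext; [|apply (l2_bound_sub _ _ _ _ HP HKb)]].
  - lra.
  - intros s; simpl. ring.
Qed.

Lemma J_point_bound x : exists A, 0 <= A /\ forall d e, l2_bound d e -> Cnorm2 (Jz d x) <= A * e.
Proof.
  set (R0 := Rsum (nbhd par ch x) (fun y => Cnorm2 (J (delta x) y))).
  assert (HR0 : 0 <= R0) by (apply Rsum_nonneg; intros; apply Cnorm2_nonneg).
  exists (2 * R0 + 2 * Cnorm2 z). split. pose proof (Cnorm2_nonneg z); lra.
  intros d e Hd.
  unfold P7.Jz. eapply Rle_trans. apply Cnorm2_sub.
  rewrite <- (J_delta_sum par lev ch Htree lam beta x d (nbhd par ch x)); [|apply (nbhd_nodup par lev ch Htree)|apply incl_refl].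
  pose proof (CS (nbhd par ch x) (J (delta x)) d) as H1. fold R0 in H1.
  pose proof (Hd _ (nbhd_nodup par lev ch Htree x)) as H2.
  pose proof (l2_bound_point _ _ x Hd) as H3.
  rewrite Cnorm2_mul.
  assert (Rsum (nbhd par ch x) (fun x0 => Cnorm2 (d x0)) * R0 <= e * R0) by (apply Rmult_le_compat_r; auto).
  pose proof (Cnorm2_nonneg z). pose proof (Cnorm2_nonneg (d x)).
  nra.
Qed.

End Hard.

End P9.
Import P9.

Module P10.

Section Final.
Context {V : Type} (par : V -> V) (lev : V -> nat) (ch : V -> list V)
  (Htree : leveled_tree par lev ch) (lam beta : V -> R) (Hlam : forall x, 0 < lam x)
  (z : Cplx) (Hz : im z <> 0) (v : V -> Cplx) (Hv0 : exists x, v x <> C0)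
  (Hv : forall x, Japply par ch lam beta v x = Cmul z (v x)).
Implicit Types (f g u w a h : V -> Cplx) (L K : list V) (x y : V).

Local Notation J := (Japply par ch lam beta).
Local Notation T := (J_fin par ch lam beta).
Local Notation Jz := (Jz par ch lam beta z).

Lemma Hiz2 : 0 < im z * im z.
Proof. destruct (Rtotal_order (im z) 0) as [h|[h|h]]; [nra|contradiction|nra]. Qed.

Lemma adjoint_in_closure u w : ~ l2 v -> adjoint (closure T) u w -> closure T u w.
Proof.
  intros Hn Had.
  pose proof (adj_pointwise par lev ch Htree lam beta u w Had) as HJ.
  destruct Had as [Hu [Hw _]].
  set (h := fun x => Csub (w x) (Cmul z (u x))).
  assert (Hh : l2 h) by (apply l2_sub; auto; apply l2_scale; auto).
  assert (Hex : forall k : nat, exists Phi, finsupp Phi /\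
            l2_bound (fun s => Csub (Jz Phi s) (h s)) (/ (INR k + 1))).
  { intros k. apply (approx_h par lev ch Htree lam beta Hlam z Hz v Hv0 Hv); auto. apply inv_pos. }
  set (phi := fun k => proj1_sig (constructive_indefinite_description _ (Hex k))).
  assert (Hphi : forall k, finsupp (phi k) /\ l2_bound (fun s => Csub (Jz (phi k) s) (h s)) (/ (INR k + 1))).
  { intros k. unfold phi. apply (proj2_sig (constructive_indefinite_description _ (Hex k))). }
  pose proof Hiz2 as Hiz.
  assert (Hc : forall eps, 0 < eps -> exists N, forall k l, (N <= k)%nat -> (N <= l)%nat ->
     l2_bound (fun x => Csub (phi k x) (phi l x)) eps).
  { intros eps He. destruct (small_inv (eps * (im z * im z) / 4)) as [N HN].
    { apply Rdiv_lt_0_compat; [nra|lra]. }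
    exists N. intros k l Hk Hl.
    destruct (Hphi k) as [Hfk Hbk]. destruct (Hphi l) as [Hfl Hbl].
    assert (HB : l2_bound (Jz (fun x => Csub (phi k x) (phi l x))) (2 * / (INR k + 1) + 2 * / (INR l + 1))).
    { eapply l2_bound_ext; [|apply (l2_bound_sub _ _ _ _ Hbk Hbl)].
      intros s. rewrite Jz_sub. ring. }
    pose proof (energy par lev ch Htree lam beta z Hz _ _ (finsupp_sub _ _ Hfk Hfl) HB) as HE.
    eapply l2_bound_mono; [|apply HE].
    pose proof (HN k Hk). pose proof (HN l Hl).
    apply (Rmult_le_reg_r (im z * im z)); auto. unfold Rdiv.
    rewrite Rmult_assoc, Rinv_l, Rmult_1_r by lra. nra. }
  destruct (l2_complete phi Hc) as [f Cf].
  assert (Hfl2 : l2 f) by (apply (l2_conv_l2 phi); auto; intros k; apply finsupp_l2, Hphi).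
  assert (HJf : forall x, Jz f x = h x).
  { intros x. apply Csub_zero_eq. apply Cnorm2_small_zero. intros e He.
    destruct (J_point_bound par lev ch Htree lam beta z x) as [A [HA HAb]].
    destruct (Cf (e / (4 * (A + 1)))) as [N1 HN1]. { apply Rdiv_lt_0_compat; lra. }
    destruct (small_inv (e / 4)) as [N2 HN2]. lra.
    set (k := (N1 + N2)%nat).
    specialize (HN1 k ltac:(unfold k; lia)). specialize (HN2 k ltac:(unfold k; lia)).
    pose proof (HAb _ _ HN1) as H1.
    pose proof (l2_bound_point _ _ x (proj2 (Hphi k))) as H2. simpl in H2.
    replace (Csub (Jz f x) (h x)) with (Csub (Csub (Jz (phi k) x) (h x)) (Jz (fun s => Csub (phi k s) (f s)) x))
      by (rewrite Jz_sub; ring).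
    eapply Rle_trans. apply Cnorm2_sub.
    assert (A * (e / (4 * (A + 1))) <= e / 4).
    { apply (Rmult_le_reg_r (4 * (A + 1))). lra.
      replace (A * (e / (4 * (A + 1))) * (4 * (A + 1))) with (A * e) by (field; lra). nra. }
    lra. }
  set (y := fun s => Csub (f s) (u s)).
  assert (Hy : l2 y) by (apply l2_sub; auto).
  assert (HJy : forall x, Jz y x = C0).
  { intros x. unfold y. rewrite Jz_sub, HJf. unfold h, P7.Jz. rewrite HJ. ring. }
  assert (Hy0 : forall x, y x = C0).
  { intros x. destruct Hy as [My HMy]. pose proof (l2_bound_nonneg _ _ HMy) as HMy0.
    apply Cnorm2_small_zero. intros e He.
    destruct (DENS par lev ch Htree lam beta Hlam z Hz v Hv0 Hv Hn x (e / (My + 1))) as [P [HPf HPb]].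
    { apply Rdiv_lt_0_compat; lra. }
    destruct (finsupp_nodup _ HPf) as [K [HK HKz]].
    destruct (exists_nodup_cover (NK par ch K ++ [x])) as [L [HL HiL]].
    assert (Hi : incl (NK par ch K) L) by (intros s Hs; apply HiL, in_or_app; auto).
    assert (Hx : In x L) by (apply HiL, in_or_app; right; left; auto).
    pose proof (Sym par lev ch Htree lam beta P y K L HK HKz HL Hi) as HS.
    assert (H0 : Csum L (fun s => Cmul (Jz P s) (y s)) = C0).
    { unfold P7.Jz.
      rewrite (Csum_ext_in L _ (fun s => Csub (Cmul (J P s) (y s)) (Cmul z (Cmul (P s) (y s))))) by (intros; ring).
      rewrite Csum_sub, Csum_scale, HS, <- Csum_scale, <- Csum_sub.
      apply Csum_zero. intros s _. pose proof (HJy s) as E. unfold P7.Jz in E.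
      replace (Csub (Cmul (P s) (J y s)) (Cmul z (Cmul (P s) (y s))))
        with (Cmul (P s) (Csub (J y s) (Cmul z (y s)))) by ring.
      rewrite E. ring. }
    assert (E : y x = Copp (Csum L (fun s => Cmul (Csub (Jz P s) (delta x s)) (y s)))).
    { rewrite (Csum_ext_in L _ (fun s => Csub (Cmul (Jz P s) (y s)) (Cmul (delta x s) (y s)))) by (intros; ring).
      rewrite Csum_sub, H0, delta_sum; auto. ring. }
    rewrite E, Cnorm2_opp.
    eapply Rle_trans. apply (inner_bound' L _ _ _ _ HL HPb HMy).
    apply (Rmult_le_reg_r (My + 1)). lra.
    replace (e / (My + 1) * My * (My + 1)) with (e * My) by (field; lra). nra. }
  exists phi, (fun k => J (phi k)). split; [|split].
  - intros k. split; [apply Hphi|auto].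
  - intros e He. destruct (Cf e He) as [N HN]. exists N. intros k Hk.
    eapply l2_bound_ext; [|apply (HN k Hk)]. intros s. simpl.
    pose proof (Hy0 s) as E. unfold y in E. apply Csub_zero_eq in E. rewrite E. auto.
  - intros e He.
    set (z2 := Cnorm2 z). assert (Hz2 : 0 <= z2) by apply Cnorm2_nonneg.
    destruct (Cf (e / (4 * (z2 + 1)))) as [N1 HN1]. { apply Rdiv_lt_0_compat; lra. }
    destruct (small_inv (e / 4)) as [N2 HN2]. lra.
    exists (N1 + N2)%nat. intros k Hk.
    specialize (HN1 k ltac:(lia)). specialize (HN2 k ltac:(lia)).
    pose proof (proj2 (Hphi k)) as Hb.
    eapply l2_bound_mono; [|eapply l2_bound_ext; [|apply (l2_bound_add _ _ _ _ Hb (l2_bound_scale z _ _ HN1))]].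
    + fold z2. assert (z2 * (e / (4 * (z2 + 1))) <= e / 4).
      { apply (Rmult_le_reg_r (4 * (z2 + 1))). lra.
        replace (z2 * (e / (4 * (z2 + 1))) * (4 * (z2 + 1))) with (z2 * e) by (field; lra). nra. }
      lra.
    + intros s. simpl. pose proof (Hy0 s) as E. unfold y in E. apply Csub_zero_eq in E.
      unfold h, P7.Jz. rewrite <- E. ring.
Qed.

Theorem main_thm : essentially_selfadjoint T <-> ~ l2 v.
Proof.
  split.
  - intros ES Hl. apply (v_not_closure par lev ch Htree lam beta z Hz v Hv0).
    apply ES. apply (v_adjoint par lev ch Htree lam beta z v Hv); auto.
  - intros Hn u w. split.
    + intros Hc. pose proof (closure_l2 par lev ch Htree lam beta _ _ Hc) as [Hu Hw].
      split; [auto|split; [auto|]].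
      intros f g Hfg. apply (closure_sym par lev ch Htree lam beta u w f g Hc Hfg).
    + apply adjoint_in_closure; auto.
Qed.

End Final.

End P10.
Import P10.

Theorem corollary4 (V : Type) (par : V -> V) (lev : V -> nat) (ch : V -> list V)
  (Htree : leveled_tree par lev ch)
  (lam beta : V -> R) (Hlam : forall x, 0 < lam x)
  (z : Cplx) (Hz : im z <> 0)
  (v : V -> Cplx) (Hv0 : exists x, v x <> C0)
  (Hv : forall x, Japply par ch lam beta v x = Cmul z (v x)) :
  essentially_selfadjoint (J_fin par ch lam beta) <-> ~ l2 v.
Proof.
  exact (main_thm par lev ch Htree lam beta Hlam z Hz v Hv0 Hv).
Qed.
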